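(* Let $X_3=FVP_3\cap FVK_3$. Then $$X_3\cong \mathbb Z^2 * \mathbb F_3 * \Gamma,$$ where $\mathbb F_3$ is a free group of rank $3$ and $\Gamma=\langle x,y,u,v,p,q\mid xy=uv,\ vu=pq,\ qp=yx\rangle$.
   Context: For $n\ge 2$, the flat virtual braid group $FVB_n$ is the group with generators $\sigma_1,\dots,\sigma_{n-1},\rho_1,\dots,\rho_{n-1}$ and defining relations: $\sigma_i^2=1$, $\rho_i^2=1$ for $1\le i\le n-1$; $\sigma_i\sigma_{i+1}\sigma_i=\sigma_{i+1}\sigma_i\sigma_{i+1}$, $\rho_i\rho_{i+1}\rho_i=\rho_{i+1}\rho_i\rho_{i+1}$ and $\rho_i\rho_{i+1}\sigma_i=\sigma_{i+1}\rho_i\rho_{i+1}$ for $1\le i\le n-2$; $\sigma_i\sigma_j=\sigma_j\sigma_i$, $\rho_i\rho_j=\rho_j\rho_i$ and $\rho_i\sigma_j=\sigma_j\rho_i$ for $|i-j|\ge 2$. Let $S_n=\langle\sigma_1,\dots,\sigma_{n-1}\rangle$ and $S_n'=\langle\rho_1,\dots,\rho_{n-1}\rangle$ in $FVB_n$. $\pi_n\colon FVB_n\to S_n$ is the homomorphism with $\pi_n(\sigma_i)=\pi_n(\rho_i)=\sigma_i$, and $FVP_n=\operatorname{Ker}\pi_n$. $\nu_n\colon FVB_n\to S_n'$ is the homomorphism with $\nu_n(\sigma_i)=1$, $\nu_n(\rho_i)=\rho_i$, and $FVK_n=\operatorname{Ker}\nu_n$. *)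

(* Defs.v *)
(* Groups are given by presentations:
   a group <S | R> is the set of words over S and S^{-1} modulo the congruence
   generated by free cancellation and the relations R. *)
From mathcomp Require Import all_boot.
Unset Strict Implicit. Unset Printing Implicit Defensive.

(* A letter: a generator together with an "is inverted" flag. *)
Definition letter (S : Type) := (S * bool)%type.
Definition word (S : Type) := seq (letter S).
Definition inv_letter {S} (x : letter S) : letter S := (x.1, ~~ x.2).
Definition gen {S} (s : S) : word S := [:: (s, false)].

Record presentation := Presentation {
  pgen : Type;
  prel : word pgen -> word pgen -> Prop }.

Inductive weq (P : presentation) : word (pgen P) -> word (pgen P) -> Prop :=
  | weq_refl w : weq P w w
  | weq_sym w1 w2 : weq P w1 w2 -> weq P w2 w1
  | weq_trans w1 w2 w3 : weq P w1 w2 -> weq P w2 w3 -> weq P w1 w3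
  | weq_cancel u v x : weq P (u ++ [:: x; inv_letter x] ++ v) (u ++ v)
  | weq_rel u v l r : prel P l r -> weq P (u ++ l ++ v) (u ++ r ++ v).

(* The subgroup of the group presented by Q given by a predicate H on words
   (closed under weq) is isomorphic to the group presented by P: there is a
   well-defined injective homomorphism from <P> to <Q> whose image is H. *)
Definition iso_to_subgroup (P Q : presentation) (H : word (pgen Q) -> Prop) :=
  exists f : word (pgen P) -> word (pgen Q),
    [/\ (forall w1 w2, weq P w1 w2 -> weq Q (f w1) (f w2)),
        (forall w1 w2, weq Q (f (w1 ++ w2)) (f w1 ++ f w2)),
        (forall w1 w2, weq Q (f w1) (f w2) -> weq P w1 w2),
        (forall w, H (f w)) &
        (forall v, H v -> exists w, weq Q (f w) v)].

Inductive fp_rel (P Q : presentation) :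
    word (pgen P + pgen Q) -> word (pgen P + pgen Q) -> Prop :=
  | fp_l l r : prel P l r ->
      fp_rel P Q (map (fun x => (inl x.1, x.2)) l) (map (fun x => (inl x.1, x.2)) r)
  | fp_r l r : prel Q l r ->
      fp_rel P Q (map (fun x => (inr x.1, x.2)) l) (map (fun x => (inr x.1, x.2)) r).

Definition free_product (P Q : presentation) : presentation :=
  @Presentation (pgen P + pgen Q)%type (fp_rel P Q).

Definition free_group (n : nat) : presentation :=
  @Presentation 'I_n (fun _ _ => False).

Definition Z2_rel (l r : word bool) : Prop :=
  l = gen true ++ gen false /\ r = gen false ++ gen true.
Definition Z2 : presentation := @Presentation bool Z2_rel.

Inductive Ggen := gx | gy | gu | gv | gp | gq.
Inductive Gamma_rel : word Ggen -> word Ggen -> Prop :=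
  | G1 : Gamma_rel (gen gx ++ gen gy) (gen gu ++ gen gv)
  | G2 : Gamma_rel (gen gv ++ gen gu) (gen gp ++ gen gq)
  | G3 : Gamma_rel (gen gq ++ gen gp) (gen gy ++ gen gx).
Definition Gamma : presentation := @Presentation Ggen Gamma_rel.

(* Flat virtual braid group FVB_n: generators sigma_i, rho_i, 1 <= i <= n-1
   (indexed here by 'I_n.-1, i.e. i-1). *)
Inductive fvgen (n : nat) := Sg of 'I_n.-1 | Rh of 'I_n.-1.
Arguments Sg {n}. Arguments Rh {n}.

Inductive FVB_rel (n : nat) : word (fvgen n) -> word (fvgen n) -> Prop :=
  | sig_sq (i : 'I_n.-1) : FVB_rel n (gen (Sg i) ++ gen (Sg i)) [::]
  | rho_sq (i : 'I_n.-1) : FVB_rel n (gen (Rh i) ++ gen (Rh i)) [::]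
  | sig_br (i j : 'I_n.-1) : (nat_of_ord i).+1 = j ->
      FVB_rel n (gen (Sg i) ++ gen (Sg j) ++ gen (Sg i))
              (gen (Sg j) ++ gen (Sg i) ++ gen (Sg j))
  | rho_br (i j : 'I_n.-1) : (nat_of_ord i).+1 = j ->
      FVB_rel n (gen (Rh i) ++ gen (Rh j) ++ gen (Rh i))
              (gen (Rh j) ++ gen (Rh i) ++ gen (Rh j))
  | mixed (i j : 'I_n.-1) : (nat_of_ord i).+1 = j ->
      FVB_rel n (gen (Rh i) ++ gen (Rh j) ++ gen (Sg i))
              (gen (Sg j) ++ gen (Rh i) ++ gen (Rh j))
  | sig_comm (i j : 'I_n.-1) : (nat_of_ord i).+2 <= j \/ (nat_of_ord j).+2 <= i ->
      FVB_rel n (gen (Sg i) ++ gen (Sg j)) (gen (Sg j) ++ gen (Sg i))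
  | rho_comm (i j : 'I_n.-1) : (nat_of_ord i).+2 <= j \/ (nat_of_ord j).+2 <= i ->
      FVB_rel n (gen (Rh i) ++ gen (Rh j)) (gen (Rh j) ++ gen (Rh i))
  | rs_comm (i j : 'I_n.-1) : (nat_of_ord i).+2 <= j \/ (nat_of_ord j).+2 <= i ->
      FVB_rel n (gen (Rh i) ++ gen (Sg j)) (gen (Sg j) ++ gen (Rh i)).

Definition FVB (n : nat) : presentation := @Presentation (fvgen n) (FVB_rel n).

(* pi_n : sigma_i, rho_i |-> sigma_i  (image in S_n = <sigma_i> <= FVB_n). *)
Definition pi_letter n (x : letter (fvgen n)) : letter (fvgen n) :=
  match x.1 with Sg i => (Sg i, x.2) | Rh i => (Sg i, x.2) end.
Definition pi_word n (w : word (fvgen n)) : word (fvgen n) := map (pi_letter n) w.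

(* nu_n : sigma_i |-> 1, rho_i |-> rho_i  (image in S_n' = <rho_i> <= FVB_n). *)
Definition is_rho n (x : letter (fvgen n)) : bool :=
  match x.1 with Sg _ => false | Rh _ => true end.
Definition nu_word n (w : word (fvgen n)) : word (fvgen n) := filter (is_rho n) w.

(* FVP_n = Ker pi_n, FVK_n = Ker nu_n (as sets of words representing them). *)
Definition in_FVP n (w : word (fvgen n)) : Prop := weq (FVB n) (pi_word n w) [::].
Definition in_FVK n (w : word (fvgen n)) : Prop := weq (FVB n) (nu_word n w) [::].
Definition in_X n (w : word (fvgen n)) : Prop := in_FVP n w /\ in_FVK n w.

(* Main.v *)
Require Import Defs.
From mathcomp Require Import all_boot.
Set Implicit Arguments. Unset Strict Implicit. Unset Printing Implicit Defensive.

Arguments weq_refl {P} w.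
Arguments weq_sym {P w1 w2}.
Arguments weq_trans {P w1 w2 w3}.
Arguments weq_cancel {P}.
Arguments weq_rel {P}.

Section Generic.
Variable P : presentation.
Local Notation S := (pgen P).
Local Notation W := (word S).
Local Notation weq := (weq P).

Definition winv (w : W) : W := rev (map inv_letter w).

Lemma weq_ctx u v a b : weq a b -> weq (u ++ a ++ v) (u ++ b ++ v).
Proof.
elim=> {a b} [w|w1 w2 _ IH|w1 w2 w3 _ IH1 _ IH2|u0 v0 x|u0 v0 l r H].
- exact: weq_refl.
- exact: weq_sym.
- exact: weq_trans IH2.
- have := weq_cancel (u ++ u0) (v0 ++ v) x.
  by rewrite !catA -!(catA _ _ v) -!catA.
- have := weq_rel (u ++ u0) (v0 ++ v) l r H.
  by rewrite !catA -!(catA _ _ v) -!catA.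
Qed.

Lemma weq_catl u a b : weq a b -> weq (u ++ a) (u ++ b).
Proof. by move=> H; have := weq_ctx u [::] H; rewrite !cats0. Qed.
Lemma weq_catr v a b : weq a b -> weq (a ++ v) (b ++ v).
Proof. by move=> H; have := weq_ctx [::] v H. Qed.
Lemma weq_cat a b c d : weq a b -> weq c d -> weq (a ++ c) (b ++ d).
Proof.
move=> H1 H2; apply: weq_trans (weq_catr c H1) _; exact: weq_catl.
Qed.

Lemma inv_letterK (x : letter S) : inv_letter (inv_letter x) = x.
Proof. by case: x => s b; rewrite /inv_letter /= negbK. Qed.

Lemma winvK w : winv (winv w) = w.
Proof. by rewrite /winv map_rev revK -map_comp (eq_map inv_letterK) map_id. Qed.

Lemma winv_cat a b : winv (a ++ b) = winv b ++ winv a.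
Proof. by rewrite /winv map_cat rev_cat. Qed.

Lemma winv_cons x w : winv (x :: w) = winv w ++ [:: inv_letter x].
Proof. by rewrite /winv /= rev_cons cats1. Qed.

Lemma weq_pair x : weq [:: x; inv_letter x] [::].
Proof. exact: (weq_cancel [::] [::] x). Qed.

Lemma weq_winvr w : weq (w ++ winv w) [::].
Proof.
elim: w => [|x w IH] /=; first exact: weq_refl.
rewrite winv_cons.
apply: weq_trans (weq_pair x).
have := weq_ctx [:: x] [:: inv_letter x] IH. by rewrite /= -!catA.
Qed.

Lemma weq_winvl w : weq (winv w ++ w) [::].
Proof. by have := weq_winvr (winv w); rewrite winvK. Qed.

Lemma weq_from_triv a b : weq (a ++ winv b) [::] -> weq a b.
Proof.
move=> H.
apply: weq_trans (_ : weq (a ++ winv b ++ b) b).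
  have := weq_catl a (weq_sym (weq_winvl b)). by rewrite cats0.
rewrite catA. have := weq_catr b H. by [].
Qed.

Lemma weq_winv_triv a : weq a [::] -> weq (winv a) [::].
Proof.
move=> H. apply: weq_trans (weq_winvl a).
have := weq_catl (winv a) (weq_sym H). by rewrite cats0.
Qed.

Variable eqS : S -> S -> bool.
Hypothesis eqSP : forall a b, eqS a b -> a = b.

Definition leqb (x y : letter S) := eqS x.1 y.1 && (x.2 == y.2).
Lemma leqbP x y : leqb x y -> x = y.
Proof.
case: x y => [s b] [s' b'] /andP [/= /eqSP -> /eqP ->]. by [].
Qed.

Fixpoint wordeqb (a b : W) : bool :=
  match a, b with
  | [::], [::] => true
  | x :: a', y :: b' => leqb x y && wordeqb a' b'
  | _, _ => false
  end.
Lemma wordeqbP a b : wordeqb a b -> a = b.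
Proof.
elim: a b => [|x a IH] [|y b] //= /andP [/leqbP -> /IH ->]. by [].
Qed.

Fixpoint fred (w : W) : W :=
  match w with
  | [::] => [::]
  | x :: w' =>
    match fred w' with
    | [::] => [:: x]
    | y :: w'' => if leqb y (inv_letter x) then w'' else x :: y :: w''
    end
  end.

Lemma fredP w : weq w (fred w).
Proof.
elim: w => [|x w IH] /=; first exact: weq_refl.
have H1 : weq (x :: w) (x :: fred w) by exact: (weq_catl [:: x] IH).
case E: (fred w) => [|y w'']; rewrite E in H1 => //.
case: ifP => [/leqbP Ey|_] //.
apply: weq_trans H1 _. rewrite Ey.
exact: (weq_cancel [::] w'' x).
Qed.

Variable rl : seq (W * W).
Hypothesis rlP : forall k, k < size rl -> prel P (nth ([::],[::]) rl k).1 (nth ([::],[::]) rl k).2.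

Definition term (t : W * nat * bool) : W :=
  let: (h, k, e) := t in
  let p := nth ([::],[::]) rl k in
  let R := p.1 ++ winv p.2 in
  h ++ (if e then winv R else R) ++ winv h.

Lemma term_triv t : t.1.2 < size rl -> weq (term t) [::].
Proof.
case: t => [[h k] e] /= Hk.
set p := nth _ rl k.
have HR : weq (p.1 ++ winv p.2) [::].
  apply: weq_trans (weq_winvr p.2).
  exact: (weq_rel [::] (winv p.2) _ _ (rlP Hk)).
have HR' : weq (if e then winv (p.1 ++ winv p.2) else p.1 ++ winv p.2) [::].
  by case: e; [apply: weq_winv_triv|].
apply: weq_trans (weq_winvr h).
by have := weq_ctx h (winv h) HR'.
Qed.

Definition checkc (T : W) (c : seq (W * nat * bool)) : bool :=
  all (fun t => t.1.2 < size rl) c && wordeqb (fred T) (fred (flatten (map term c))).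

Lemma checkcP T c : checkc T c -> weq T [::].
Proof.
case/andP=> Hall /wordeqbP Heq.
apply: weq_trans (fredP T) _. rewrite Heq.
apply: weq_trans (weq_sym (fredP _)) _.
elim: c Hall {Heq} => [|t c IH] //=; first by move=> _; exact: weq_refl.
case/andP=> Ht Hc.
have := weq_cat (term_triv Ht) (IH Hc). by [].
Qed.

Lemma checkc_eq a b c : checkc (a ++ winv b) c -> weq a b.
Proof. by move=> H; apply: weq_from_triv; exact: checkcP H. Qed.

End Generic.

Definition PP := free_product Z2 (free_product (free_group 3) Gamma).
Definition QQ := FVB 3.
Notation Qg := (fvgen 3).
Notation Pg := (pgen PP).

Definition o0 : 'I_(3.-1) := @Ordinal (3.-1) 0 erefl.
Definition o1 : 'I_(3.-1) := @Ordinal (3.-1) 1 erefl.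
Definition s0 : letter Qg := (Sg o0, false).
Definition s0i : letter Qg := (Sg o0, true).
Definition s1 : letter Qg := (Sg o1, false).
Definition s1i : letter Qg := (Sg o1, true).
Definition r0 : letter Qg := (Rh o0, false).
Definition r0i : letter Qg := (Rh o0, true).
Definition r1 : letter Qg := (Rh o1, false).
Definition r1i : letter Qg := (Rh o1, true).
Definition Qletters := [:: s0; s0i; s1; s1i; r0; r0i; r1; r1i].

Definition q0 : 'I_3 := @Ordinal 3 0 erefl.
Definition q1 : 'I_3 := @Ordinal 3 1 erefl.
Definition q2 : 'I_3 := @Ordinal 3 2 erefl.
Definition mkP (s : Pg) (b : bool) : letter Pg := (s, b).
Definition pt := mkP (inl true) false.   Definition pti := mkP (inl true) true.
Definition pf := mkP (inl false) false.  Definition pfi := mkP (inl false) true.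
Definition po0 := mkP (inr (inl q0)) false. Definition po0i := mkP (inr (inl q0)) true.
Definition po1 := mkP (inr (inl q1)) false. Definition po1i := mkP (inr (inl q1)) true.
Definition po2 := mkP (inr (inl q2)) false. Definition po2i := mkP (inr (inl q2)) true.
Definition px := mkP (inr (inr gx)) false. Definition pxi := mkP (inr (inr gx)) true.
Definition py := mkP (inr (inr gy)) false. Definition pyi := mkP (inr (inr gy)) true.
Definition pu := mkP (inr (inr gu)) false. Definition pui := mkP (inr (inr gu)) true.
Definition pv := mkP (inr (inr gv)) false. Definition pvi := mkP (inr (inr gv)) true.
Definition pp := mkP (inr (inr gp)) false. Definition ppi := mkP (inr (inr gp)) true.
Definition pq := mkP (inr (inr gq)) false. Definition pqi := mkP (inr (inr gq)) true.
Definition Pletters := [:: pt; pti; pf; pfi; po0; po0i; po1; po1i; po2; po2i; px; pxi;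
  py; pyi; pu; pui; pv; pvi; pp; ppi; pq; pqi].

Definition eqQ (a b : Qg) : bool :=
  match a, b with
  | Sg i, Sg j => nat_of_ord i == nat_of_ord j
  | Rh i, Rh j => nat_of_ord i == nat_of_ord j
  | _, _ => false
  end.
Lemma eqQP a b : eqQ a b -> a = b.
Proof. by case: a b => i [] j //= /eqP /ord_inj ->. Qed.

Definition eqG (a b : Ggen) : bool :=
  match a, b with
  | gx, gx | gy, gy | gu, gu | gv, gv | gp, gp | gq, gq => true
  | _, _ => false end.
Lemma eqGP a b : eqG a b -> a = b.
Proof. by case: a; case: b. Qed.

Definition eqPg (a b : Pg) : bool :=
  match a, b with
  | inl x, inl y => x == y
  | inr (inl i), inr (inl j) => nat_of_ord i == nat_of_ord j
  | inr (inr g), inr (inr h) => eqG g h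
  | _, _ => false end.
Lemma eqPgP a b : eqPg a b -> a = b.
Proof.
case: a b => [x|[i|g]] [y|[j|h]] //=.
- by move/eqP ->.
- by move/eqP/ord_inj ->.
- by move/eqGP ->.
Qed.

Definition Qrl : seq (word Qg * word Qg) :=
  [:: (gen (Sg o0) ++ gen (Sg o0), [::]);
      (gen (Sg o1) ++ gen (Sg o1), [::]);
      (gen (Rh o0) ++ gen (Rh o0), [::]);
      (gen (Rh o1) ++ gen (Rh o1), [::]);
      (gen (Sg o0) ++ gen (Sg o1) ++ gen (Sg o0), gen (Sg o1) ++ gen (Sg o0) ++ gen (Sg o1));
      (gen (Rh o0) ++ gen (Rh o1) ++ gen (Rh o0), gen (Rh o1) ++ gen (Rh o0) ++ gen (Rh o1));
      (gen (Rh o0) ++ gen (Rh o1) ++ gen (Sg o0), gen (Sg o1) ++ gen (Rh o0) ++ gen (Rh o1))].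

Lemma QrlP k : k < size Qrl -> prel QQ (nth ([::],[::]) Qrl k).1 (nth ([::],[::]) Qrl k).2.
Proof.
do 7 (case: k => [|k]; first by constructor). by [].
Qed.

Definition liftl (x : letter bool) : letter Pg := (inl x.1, x.2).
Definition liftr (x : letter Ggen) : letter Pg := (inr (inr x.1), x.2).
Definition Prl : seq (word Pg * word Pg) :=
  [:: (map (fun x => (inl x.1, x.2)) (gen true ++ gen false),
       map (fun x => (inl x.1, x.2)) (gen false ++ gen true));
      (map (fun x => (inr x.1, x.2)) (map (fun x => (inr x.1, x.2)) (gen gx ++ gen gy)),
       map (fun x => (inr x.1, x.2)) (map (fun x => (inr x.1, x.2)) (gen gu ++ gen gv)));
      (map (fun x => (inr x.1, x.2)) (map (fun x => (inr x.1, x.2)) (gen gv ++ gen gu)),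
       map (fun x => (inr x.1, x.2)) (map (fun x => (inr x.1, x.2)) (gen gp ++ gen gq)));
      (map (fun x => (inr x.1, x.2)) (map (fun x => (inr x.1, x.2)) (gen gq ++ gen gp)),
       map (fun x => (inr x.1, x.2)) (map (fun x => (inr x.1, x.2)) (gen gy ++ gen gx)))].

Lemma PrlP k : k < size Prl -> prel PP (nth ([::],[::]) Prl k).1 (nth ([::],[::]) Prl k).2.
Proof.
case: k => [|[|[|[|k]]]] Hk; last by [].
- exact: (fp_l Z2 (free_product (free_group 3) Gamma) (gen true ++ gen false) (gen false ++ gen true) (conj erefl erefl)).
- exact: (fp_r Z2 (free_product (free_group 3) Gamma) _ _ (fp_r (free_group 3) Gamma (gen gx ++ gen gy) (gen gu ++ gen gv) G1)).
- exact: (fp_r Z2 (free_product (free_group 3) Gamma) _ _ (fp_r (free_group 3) Gamma (gen gv ++ gen gu) (gen gp ++ gen gq) G2)).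
- exact: (fp_r Z2 (free_product (free_group 3) Gamma) _ _ (fp_r (free_group 3) Gamma (gen gq ++ gen gp) (gen gy ++ gen gx) G3)).
Qed.
Definition mstab : seq (seq nat) := [:: [::2;3;0;1;5;4]; [::1;0;4;5;2;3]].
Definition reptab : seq (seq (word Qg)) := [::[::[::];
 [::s1;r1];
 [::s0;r0];
 [::s0;s1;r1;r0];
 [::s0;r0;s1;r1];
 [::r0;s1;r1;r0]];
 [::[::s1];
 [::r1];
 [::s0;r0;s1];
 [::r1;s0;r0];
 [::s0;r0;r1];
 [::s0;s1;r0;r1;r0]];
 [::[::s0];
 [::s0;s1;r1];
 [::r0];
 [::s1;r1;r0];
 [::r0;s1;r1];
 [::s0;r0;s1;r1;r0]];
 [::[::s1;s0];
 [::r1;s0];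
 [::s1;r0];
 [::r1;r0];
 [::s0;s1;r0;r1];
 [::s0;r0;r1;r0]];
 [::[::s0;s1];
 [::s0;r1];
 [::r0;s1];
 [::s0;r1;s0;r0];
 [::r0;r1];
 [::s1;r0;r1;r0]];
 [::[::s0;s1;s0];
 [::s0;r1;s0];
 [::s0;s1;r0];
 [::s0;r1;r0];
 [::s1;r0;r1];
 [::r0;r1;r0]]].
Definition tautab : seq (seq (seq (word Pg))) := [::[::[::[::];
 [::];
 [::];
 [::]];
 [::[::px;px;py;pv];
 [::po2i];
 [::];
 [::]];
 [::[::pvi;pqi;pxi;pxi;po2i];
 [::];
 [::];
 [::]];
 [::[::pti;pfi];
 [::pfi;po1];
 [::];
 [::]];
 [::[::po0i;pti;pfi;po1];
 [::po0i];
 [::];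
 [::]];
 [::[::po2;px;px;py];
 [::po2;px;px;pq;pv;px;py;pv];
 [::];
 [::]]];
 [::[::[::];
 [::];
 [::];
 [::]];
 [::[::];
 [::po2];
 [::];
 [::]];
 [::[::pxi];
 [::];
 [::po0i;pti];
 [::]];
 [::[::po1i];
 [::po1i;pf];
 [::];
 [::]];
 [::[::];
 [::po0];
 [::];
 [::]];
 [::[::pvi];
 [::pvi;pyi;pxi;pvi;pqi;pxi;pxi;po2i];
 [::];
 [::]]];
 [::[::[::];
 [::];
 [::];
 [::]];
 [::[::pvi;pyi;pxi;pxi];
 [::pvi];
 [::];
 [::]];
 [::[::po2;px;px;pq;pv];
 [::];
 [::];
 [::]];
 [::[::pf;pt];
 [::pt;po0];
 [::];
 [::]];
 [::[::po1i;pf;pt;po0];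
 [::po1i];
 [::];
 [::]];
 [::[::pyi;pxi;pxi;po2i];
 [::pxi];
 [::];
 [::]]];
 [::[::[::];
 [::];
 [::pt;po0];
 [::pt;po0]];
 [::[::];
 [::po2;px;px;py];
 [::];
 [::po1i;pf]];
 [::[::px];
 [::px;px;py;pv];
 [::];
 [::]];
 [::[::po1];
 [::];
 [::];
 [::]];
 [::[::];
 [::pti;pfi];
 [::];
 [::]];
 [::[::pv];
 [::pvi;pqi;pxi;pxi;po2i];
 [::];
 [::]]];
 [::[::[::];
 [::];
 [::];
 [::]];
 [::[::];
 [::pv];
 [::];
 [::]];
 [::[::po2;px;px;pq;pv;px;py;pv];
 [::];
 [::po1i;pf];
 [::]];
 [::[::po0i];
 [::po0i;pti];
 [::];
 [::]];
 [::[::];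
 [::po1];
 [::];
 [::]];
 [::[::po2i];
 [::px];
 [::];
 [::]]];
 [::[::[::];
 [::];
 [::pfi;po1];
 [::pfi;po1]];
 [::[::];
 [::pyi;pxi;pxi;po2i];
 [::];
 [::po0i;pti]];
 [::[::pvi;pyi;pxi;pvi;pqi;pxi;pxi;po2i];
 [::pvi;pyi;pxi;pxi];
 [::];
 [::]];
 [::[::po0];
 [::];
 [::];
 [::]];
 [::[::];
 [::pf;pt];
 [::];
 [::]];
 [::[::po2];
 [::po2;px;px;pq;pv];
 [::];
 [::]]]].
Definition rep1tab : seq (word Qg) := [::[::];
 [::s1];
 [::s0];
 [::s1;s0];
 [::s0;s1];
 [::s0;s1;s0]].
Definition rep2tab : seq (word Qg) := [::[::];
 [::r1];
 [::r0];
 [::r1;r0];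
 [::r0;r1];
 [::r0;r1;r0]].
Definition fg_pt : word Qg := [::s1;s0;r0;r1;s1i;r1i;r0i;s0i].
Definition fg_pf : word Qg := [::r0;r1;s1;r1i;r0;s0i;s1i;s0i].
Definition fg_po0 : word Qg := [::s0;r0;r1;s1;r1i;s1i;r0i;s0i].
Definition fg_po1 : word Qg := [::r0;r1;s1;r1i;s1i;r0i].
Definition fg_po2 : word Qg := [::r1;s1;r1i;s1i].
Definition fg_px : word Qg := [::s1;r0;s0;s1i;r0i;s0i].
Definition fg_py : word Qg := [::s0;r0;s1;s0i;r0i;s1i;s0;r0;s1;s0i;s1;r0i;r1;s1i;r1i;s0i].
Definition fg_pu : word Qg := [::s0;r0;s1;s0i;s1;r0i;r1;s1i;r1i;s1;r1;s1i;r1i;s0i].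
Definition fg_pv : word Qg := [::s0;r1;s1;r1i;s1i;s0i].
Definition fg_pp : word Qg := [::s0;r1;s1;r1i;s1i;r0;s1;s0i;s1;r0i;r1;s1i;r1i;r0;s0i;r0i;r1;s1;r1i;r0;s0;s1i;r0i;s0i;s1;r0;s0;s1i;r0i;s0i].
Definition fg_pq : word Qg := [::s0;r0;s1;s0i;r0i;s1i;s0;r0;s1;s0i;r0i;r1;s1i;r1i;r0;s0;r0i;s1;r1;s1i;r1i;s0i].
Definition certE : seq (seq (seq (seq (word Qg * nat * bool)))) := [::[::[::[::];
 [::([::s0i;s0i],0,true)];
 [::];
 [::([::s1i;s1i],1,true)];
 [::];
 [::([::r0i;r0i],2,true)];
 [::];
 [::([::r1i;r1i],3,true)]];
 [::[::([::s1;r1;s0;r1i;r0i;r0i],2,false);([::s1],2,true);([::s1;r0],6,false)];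
 [::([::s1;r1;s0i;s0i],0,true);([::s1;r1;s0;r1i;r0i;r0i],2,false);([::s1],2,true);([::s1;r0],6,false)];
 [::([::s1;r1;s1i],1,false)];
 [::];
 [::];
 [::([::s1;r1;r0i;r0i],2,true)];
 [::([::s1],3,false)];
 [::]];
 [::[::([::s0;r0;s0i],0,false)];
 [::];
 [::];
 [::([::s0;r0;s1i;s1i],1,true)];
 [::([::s0],2,false)];
 [::];
 [::];
 [::([::s0;r0;r1i;r1i],3,true)]];
 [::[::([::s0;s1;r1;r0;s0;r0i;r1i;s1i;r0;r1;s1;r1i;r0;s0i;s1i;s0i;s1;s0;r0;r1;s0i],0,true);([::s0;s1;r1;r0;s0;r0i;r1i;s1i;r0;r1;s1;r1i;r0;s0i;s1i;s0i;s1;s0;r0;r1;s0;r1i;r0i;r0i],2,false);([::s0;s1;r1;r0;s0;r0i;r1i;s1i;r0;r1;s1;r1i;r0;s0i;s1i;s0i;s1;s0;r0;r1;s0;r1i;r0i;s1i;s0i;s1i],4,true);([::s0;s1;r1;r0;s0;r0i;r1i;s1i;r0;r1;s1;r1i;r0;s0i;s1i;s0i;s1;s0],6,false);([::s0;s1;r1;r0;s0;r0i;r1i;s1i;r0;r1;s1;s0;s1i],1,true);([::s0;s1;r1;r0;s0;r0i;r1i;s1i;r0;r1;s1;s0;s1;r1i;r0i;s1;r0;r1;s1i;r1i;r0i;s1i;r0;r1;s1i;s1i],1,false);([::s0;s1;r1;r0;s0;r0i;r1i;s1i;r0;r1;s1;s0;s1;r1i;r0i],6,true);([::s0;s1;r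1;r0;s0;r0i;r1i;s1i;r0;r1;s1;s0;s1;s0;s1i;s0i;r1i;r0i],6,false);([::s0;s1;r1;r0;s0;r0i;r1i;s1i;r0;r1;s1],4,false);([::s0;s1;r1;r0;s0;r0i;r1i;r0;r1],6,true);([::s0;s1;r1;r0;s0;r0i;r1i;r0],5,true);([::s0;s1;r1;r0;s0;r0i;r1i],2,false);([::s0;s1;r1;r0;s0;s0;r1i;r0i;r1i;r0i],2,true);([::s0;s1;r1;r0;s0;s0;r1i;r0i;r1i],5,false);([::s0;s1;r1;r0;s0i],0,false)];
 [::([::s0;s1;r1;r0;s0i;r0i;r1i;r0;r1],6,true);([::s0;s1;r1;r0;s0i;r0i;r1i;r0],5,true);([::s0;s1;r1;r0;s0i;r0i;r1i],2,false);([::s0;s1;r1;r0;r1i;r0i;r1i;r0i],2,true);([::s0;s1;r1;r0;r1i;r0i;r1i],5,false);([::s0;s1;r0;r1;s1i;r1i;r0i;s1i;r0;r1;s1;r1i;r0;s0i;s1i;s0i;s1;s0;r0;r1;s0i],0,true);([::s0;s1;r0;r1;s1i;r1i;r0i;s1i;r0;r1;s1;r1i;r0;s0i;s1i;s0i;s1;s0;r0;r1;s0;r1i;r0i;r0i],2,false);([::s0;s1;r0;r1;s1i;r1i;r0i;s1i;r0;r1;s1;r1i;r0;s0i;s1i;s0i;s1;s0;r0;r1;s0;r1i;r0i;s1i;s0i;s1i],4,true);([::s0;s1;r0;r1;s1i;r1i;r0i;s1i;r0;r1;s1;r1i;r0;s0i;s1i;s0i;s1;s0],6,false);([::s0;s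1;r0;r1;s1i;r1i;r0i;s1i;r0;r1;s1;s0;s1i],1,true);([::s0;s1;r0;r1;s1i;r1i;r0i;s1i;r0;r1;s1;s0;s1;r1i;r0i;s1;r0;r1;s1i;r1i;r0i;s1i;r0;r1;s1i;s1i],1,false);([::s0;s1;r0;r1;s1i;r1i;r0i;s1i;r0;r1;s1;s0;s1;r1i;r0i],6,true);([::s0;s1;r0;r1;s1i;r1i;r0i;s1i;r0;r1;s1;s0;s1;s0;s1i;s0i;r1i;r0i],6,false);([::s0;s1;r0;r1;s1i;r1i;r0i;s1i;r0;r1;s1],4,false)];
 [::([::s0;s1;r1;r0;s1;r0i;s0i;r1i;r0;s1;r0;s0i;r1;r0],6,true);([::s0;s1;r1;r0;s1;r0i;s0i;r1i;r0;s1;r0;s0i;r1;r0;r0;r1i],3,false);([::s0;s1;r1;r0;s1;r0i;s0i;r1i;r0;s1;r0;s0i;r1;r0;r0;r1i;s0;r1i;r0i;r0i],2,true);([::s0;s1;r1;r0;s1;r0i;s0i;r1i;r0;s1;r0;s0i;r1],2,false);([::s0;s1;r1;r0;s1;r0i;s0i;r1i;r0;s1;r0;r1i;r0;s1i;s1i],1,true);([::s0;s1;r1;r0;s1;r0i;s0i;r1i;r0;s1;r0;r1i;s0i;r1i;r0],6,true);([::s0;s1;r1;r0;s1;r0i;s0i;r1i;r0;s1;r0;r1i;s0i;r1i],2,false);([::s0;s1;r1;r0;s1;r0i;s0i;r1i;r0;s1;r0;r1i;r1i;r1i],3,true);([::s0;s1;r1;r0;s1i],1,false)];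
 [::([::s0;s1;r1;r0;s1i;r0i;s0i;r1i;r0;s1;r0;s0i;r1;r0],6,true);([::s0;s1;r1;r0;s1i;r0i;s0i;r1i;r0;s1;r0;s0i;r1;r0;r0;r1i],3,false);([::s0;s1;r1;r0;s1i;r0i;s0i;r1i;r0;s1;r0;s0i;r1;r0;r0;r1i;s0;r1i;r0i;r0i],2,true);([::s0;s1;r1;r0;s1i;r0i;s0i;r1i;r0;s1;r0;s0i;r1],2,false);([::s0;s1;r1;r0;s1i;r0i;s0i;r1i;r0;s1;r0;r1i;r0;s1i;s1i],1,true);([::s0;s1;r1;r0;s1i;r0i;s0i;r1i;r0;s1;r0;r1i;s0i;r1i;r0],6,true);([::s0;s1;r1;r0;s1i;r0i;s0i;r1i;r0;s1;r0;r1i;s0i;r1i],2,false);([::s0;s1;r1;r0;s1i;r0i;s0i;r1i;r0;s1;r0;r1i;r1i;r1i],3,true)];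
 [::([::s0;s1;r1],2,false)];
 [::];
 [::([::s0;s1],5,true)];
 [::([::s0;s1;r1;r0;r1i;r0i;r1i;r0i],2,true);([::s0;s1;r1;r0;r1i;r0i;r1i],5,false)]];
 [::[::([::s0;r0;s1;r1;s0;r1i;r0;s0i;s1i;s0i;s1;s0;r0;r1;s0i],0,true);([::s0;r0;s1;r1;s0;r1i;r0;s0i;s1i;s0i;s1;s0;r0;r1;s0;r1i;r0i;r0i],2,false);([::s0;r0;s1;r1;s0;r1i;r0;s0i;s1i;s0i;s1;s0;r0;r1;s0;r1i;r0i;s1i;s0i;s1i],4,true);([::s0;r0;s1;r1;s0;r1i;r0;s0i;s1i;s0i;s1;s0],6,false);([::s0;r0;s1;r1;s0i],0,false)];
 [::([::s0;r0;s1;r1;s0i;r1i;r0;s0i;s1i;s0i;s1;s0;r0;r1;s0i],0,true);([::s0;r0;s1;r1;s0i;r1i;r0;s0i;s1i;s0i;s1;s0;r0;r1;s0;r1i;r0i;r0i],2,false);([::s0;r0;s1;r1;s0i;r1i;r0;s0i;s1i;s0i;s1;s0;r0;r1;s0;r1i;r0i;s1i;s0i;s1i],4,true);([::s0;r0;s1;r1;s0i;r1i;r0;s0i;s1i;s0i;s1;s0],6,false)];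
 [::([::s0;r0;s1;r1;s1i],1,false)];
 [::];
 [::];
 [::([::s0;r0;s1;r1;r0i;r0i],2,true)];
 [::([::s0;r0;s1],3,false)];
 [::]];
 [::[::([::r0;s1;r1;r0;s0;r0i;r1i;s1i;r0i;r1;s0;s1i;s0i;s1],4,true);([::r0;s1;r1;r0;s0;r0i;r1i;s1i;r0i;r1;s0;s1i;s0i;s1;s0;s1;s0;s1i;s0i;s1i;s1i],1,true);([::r0;s1;r1;r0;s0;r0i;r1i;s1i;r0i;r1;s0;s1i;s0i;s1;s0;s1i],1,false);([::r0;s1;r1;r0;s0;r0i;r1i;s1i;r0i;r1;s0;s1i;s0i;s1;s0;r1i;r0i;r0i],2,false);([::r0;s1;r1;r0;s0;r0i;r1i;s1i;r0i;r1;s0;s1i;s0i;s1;r1i],2,true);([::r0;s1;r1;r0;s0;r0i;r1i;s1i;r0i;r1;s0;s1i;s0i;s1;r1i;r0],6,false);([::r0;s1;r1;r0;s0;r1i;r0i;s0i;r1i;r0;s1;r0i],5,true);([::r0;s1;r1;r0;s0;r1i;r0i;s0i;r1i;r0;s1;r1;r0;r1i;r0i;r1i;r0;s1i;r0i;r1;s0;r1i;r0i;r0i],2,false);([::r0;s1;r1;r0;s0;r1i;r0i;s0i;r1i;r0;s1;r1;r0;r1i;r0i;r1i;r0;s1i;r0i],2,true);([::r0;s1;r1;r0;s0;r1i;r0i;s0i;r1i;r0;s1;r1;r0;r1i;r0i;r1i;r0;s1i],6,false);([::r0;s1],5,true);([::r0;s1;r0;r1i],3,false);([::r0;s1;r0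;r1i;r0;r1i;r1i],3,true);([::r0;s1;r0;r1i;s0i;r1i;r0],6,true);([::r0;s1;r0;r1i;s0i;r1i],2,false);([::r0;s1;r0;r1i;r1i;r1i],3,true);([::r1;s0],6,false)];
 [::([::r0;s1;r1;r0;s0i;s0i],0,true);([::r0;s1;r1;r0;s0;r1i;r0i;s0i;r1i;r0;s1;r0i],5,true);([::r0;s1;r1;r0;s0;r1i;r0i;s0i;r1i;r0;s1;r1;r0;r1i;r0i;r1i;r0;s1i;r0i;r1;s0;r1i;r0i;r0i],2,false);([::r0;s1;r1;r0;s0;r1i;r0i;s0i;r1i;r0;s1;r1;r0;r1i;r0i;r1i;r0;s1i;r0i],2,true);([::r0;s1;r1;r0;s0;r1i;r0i;s0i;r1i;r0;s1;r1;r0;r1i;r0i;r1i;r0;s1i],6,false);([::r0;s1],5,true);([::r0;s1;r0;r1i],3,false);([::r0;s1;r0;r1i;r0;r1i;r1i],3,true);([::r0;s1;r0;r1i;s0i;r1i;r0],6,true);([::r0;s1;r0;r1i;s0i;r1i],2,false);([::r0;s1;r0;r1i;r1i;r1i],3,true);([::r1;s0],6,false);([::r1;s1],4,true);([::r1;s1;s0;s1;s0;s1i;s0i;s1i;s1i],1,true);([::r1;s1;s0;s1i],1,false);([::r1;s1;s0;r1i;r0i;r0i],2,false);([::r1;s1;r1i],2,true);([::r1;s1;r1i;r0],6,false)];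
 [::([::r0;s1;r1;r0;s1;r0i;r1i;s0i;s1i],4,true);([::r0;s1;r1;r0;s1;r0i;r1i;s0i;s1i;s0;s1;s0i],0,false);([::r0;s1;r1;r0;s1;r0i;r1i;s0i;s1i;s0;s1;s0i;s1i;s1i],1,true);([::r0;s1;r1;r0],6,true);([::r0;s1;r1;r0;r0;r1i],3,false);([::r0;s1;r1;r0;r0;r1i;s0;r1i;r1i],3,true);([::r0;s1;r1],2,false);([::r0;s1;s0;r1;r0i;r0i],2,true)];
 [::([::r0;s1;r1;r0;s1i;s1i],1,true);([::r0;s1;r1;r0],6,true);([::r0;s1;r1;r0;r0;r1i],3,false);([::r0;s1;r1;r0;r0;r1i;s0;r1i;r1i],3,true);([::r0;s1;r1],2,false);([::r0;s1;s0;r1;r0i;r0i],2,true);([::r0],4,true);([::r0;s0;s1;s0i],0,false);([::r0;s0;s1;s0i;s1i;s1i],1,true)];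
 [::([::r0;s1;r1],2,false)];
 [::];
 [::([::r0;s1;r1;r0;r1;r0i;s0i;r1i;r0;s1],5,true);([::r0;s1;r1;r0;r1;r0i;s0i;r1i;r0;s1;r0;r1i],3,false);([::r0;s1;r1;r0;r1;r0i;s0i;r1i;r0;s1;r0;r1i;r0;r1i;r1i],3,true);([::r0;s1;r1;r0;r1;r0i;s0i;r1i;r0;s1;r0;r1i;s0i;r1i;r0],6,true);([::r0;s1;r1;r0;r1;r0i;s0i;r1i;r0;s1;r0;r1i;s0i;r1i],2,false);([::r0;s1;r1;r0;r1;r0i;s0i;r1i;r0;s1;r0;r1i;r1i;r1i],3,true);([::r0;s1;r1;r0;r1i],3,false)];
 [::([::r0;s1;r1;r0;r1i;r0i;s0i;r1i;r0;s1],5,true);([::r0;s1;r1;r0;r1i;r0i;s0i;r1i;r0;s1;r0;r1i],3,false);([::r0;s1;r1;r0;r1i;r0i;s0i;r1i;r0;s1;r0;r1i;r0;r1i;r1i],3,true);([::r0;s1;r1;r0;r1i;r0i;s0i;r1i;r0;s1;r0;r1i;s0i;r1i;r0],6,true);([::r0;s1;r1;r0;r1i;r0i;s0i;r1i;r0;s1;r0;r1i;s0i;r1i],2,false);([::r0;s1;r1;r0;r1i;r0i;s0i;r1i;r0;s1;r0;r1i;r1i;r1i],3,true)]]];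
 [::[::[::];
 [::([::s1;s0i;s0i],0,true)];
 [::([::],1,false)];
 [::];
 [::];
 [::([::s1;r0i;r0i],2,true)];
 [::];
 [::([::s1;r1i;r1i],3,true)]];
 [::[::];
 [::([::r1;s0i;s0i],0,true)];
 [::];
 [::([::r1;s1i;s1i],1,true)];
 [::];
 [::([::r1;r0i;r0i],2,true)];
 [::([::],3,false)];
 [::]];
 [::[::([::s0;r0;s1;s0i],0,false)];
 [::];
 [::([::s0;r0],1,false)];
 [::];
 [::([::s0;r0;s1;r0i],2,false)];
 [::];
 [::];
 [::([::s0;r0;s1;r1i;r1i],3,true)]];
 [::[::([::r1;s0;r0;s0;r0i;r1i;r0;r1],6,true);([::r1;s0;r0;s0;r0i;r1i;r0],5,true);([::r1;s0;r0;s0;r0i;r1i],2,false);([::r1;s0;r0;s0;s0;r1i;r1i],3,true);([::r1;s0;r0;s0;s0;r0i;s0i;r1i;r0;s1;r0;r1i;r1i;r1i],3,false);([::r1;s0;r0;s0;s0;r0i;s0i;r1i;r0;s1;r0;r1i;s0i;r1i],2,true);([::r1;s0;r0;s0;s0;r0i;s0i;r1i;r0;s1;r0;r1i;s0i;r1i;r0],6,false);([::r1;s0;r0;s0;s0;r0i;s0i;r1i;r0;s1;r0;r1i;r0;r1i;r1i],3,false);([::r1;s0;r0;s0;s0;r0i;s0i;r1i;r0;s1;r0;r1i],3,true);([::r1;s0;r0;s0;s0;r0i;s0i;r1i;r0;s1],5,false);([::r1;s0;r0;s0i],0,false)];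
 [::([::r1;s0;r0;s0i;r0i;r1i;r0;r1],6,true);([::r1;s0;r0;s0i;r0i;r1i;r0],5,true);([::r1;s0;r0;s0i;r0i;r1i],2,false);([::r1;s0;r0;r1i;r1i],3,true);([::r0;s1;r0;r1i;r1i;r1i],3,false);([::r0;s1;r0;r1i;s0i;r1i],2,true);([::r0;s1;r0;r1i;s0i;r1i;r0],6,false);([::r0;s1;r0;r1i;r0;r1i;r1i],3,false);([::r0;s1;r0;r1i],3,true);([::r0;s1],5,false)];
 [::([::r0;s1;r0;r1i;r1i;r1i],3,false);([::r0;s1;r0;r1i;s0i;r1i],2,true);([::r0;s1;r0;r1i;s0i;r1i;r0],6,false);([::r0;s1;r0;r1i;r0;s1i;s1i],1,false);([::r0;s1;r0;s0i;r1],2,true);([::r0;s1;r0;s0i;r1;r0;r0;r1i;s0;r1i;r0i;r0i],2,false);([::r0;s1;r0;s0i;r1;r0;r0;r1i],3,true);([::r0;s1;r0;s0i;r1;r0],6,false)];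
 [::([::r1;s0;r0;s1i;s1i],1,true);([::r0;s1;r0;r1i;r1i;r1i],3,false);([::r0;s1;r0;r1i;s0i;r1i],2,true);([::r0;s1;r0;r1i;s0i;r1i;r0],6,false);([::r0;s1;r0;r1i;r0;s1i;s1i],1,false);([::r0;s1;r0;s0i;r1],2,true);([::r0;s1;r0;s0i;r1;r0;r0;r1i;s0;r1i;r0i;r0i],2,false);([::r0;s1;r0;s0i;r1;r0;r0;r1i],3,true);([::r0;s1;r0;s0i;r1;r0],6,false)];
 [::([::r1;s0],2,false)];
 [::];
 [::([::r0;s1;r0;r1i;r1i;r1i],3,false);([::r0;s1;r0;r1i;s0i;r1i],2,true);([::r0;s1;r0;r1i;s0i;r1i;r0],6,false);([::r0;s1;r0;r1i;r0;r1i;r1i],3,false);([::r0;s1;r0;r1i],3,true);([::r0;s1],5,false)];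
 [::([::r1;s0;r0;r1i;r1i],3,true);([::r0;s1;r0;r1i;r1i;r1i],3,false);([::r0;s1;r0;r1i;s0i;r1i],2,true);([::r0;s1;r0;r1i;s0i;r1i;r0],6,false);([::r0;s1;r0;r1i;r0;r1i;r1i],3,false);([::r0;s1;r0;r1i],3,true);([::r0;s1],5,false)]];
 [::[::([::s0],6,false)];
 [::([::s0;r0;r1;s0i;r1i;r0i],6,true);([::s0;s1i;s1i],1,true)];
 [::];
 [::([::s0;r0;r1;s1i;s1i],1,true)];
 [::];
 [::([::s0;r0;r1;r0i;r0i],2,true)];
 [::([::s0;r0],3,false)];
 [::]];
 [::[::([::s0;s1;r0;r1;r0;s0;r0i;r1i;r0i;r1],6,true);([::s0;s1;r0;r1;r0;s0;r0i;r1i;r0i],5,true);([::s0;s1;r0;r1;r0;s0;s0;r1i;r0i;r1i],5,false);([::s0;s1;r0;r1;r0;s0i],0,false)];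
 [::([::s0;s1;r0;r1;r0;s0i;r0i;r1i;r0i;r1],6,true);([::s0;s1;r0;r1;r0;s0i;r0i;r1i;r0i],5,true);([::s0;s1;r0;r1;r0;r1i;r0i;r1i],5,false)];
 [::([::s0;s1;r0;r1;r0;s1;r0i;r1i;s1i;s0;s1;s0i;s1i;s1i],1,false);([::s0;s1;r0;r1;r0;s1;r0i;r1i;s1i;s0;s1;s0i],0,true);([::s0;s1;r0;r1;r0;s1;r0i;r1i;s1i],4,false);([::s0;s1;r0;r1;r0;s1;r0i;r1i;s0;r1;r0i;r0i],2,false);([::s0;s1;r0;r1;r0;s1;r0i],2,true);([::s0;s1;r0;r1;r0;s1;r0;r1i;s0;r1i;r1i],3,false);([::s0;s1;r0;r1;r0;s1;r0;r1i],3,true);([::s0;s1;r0;r1;r0;s1],6,false);([::s0;s1;r0;r1;r0;s1i],1,false)];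
 [::([::s0;s1;r0;r1;r0;s1i;r0i;r1i;s0;r1;r0i;r0i],2,false);([::s0;s1;r0;r1;r0;s1i;r0i],2,true);([::s0;s1;r0;r1;r0;s1i;r0;r1i;s0;r1i;r1i],3,false);([::s0;s1;r0;r1;r0;s1i;r0;r1i],3,true);([::s0;s1;r0;r1;r0;s1i],6,false);([::s0;s1;r0;s0i;s1i;s0;s1;s0i;s1i;s1i],1,false);([::s0;s1;r0;s0i;s1i;s0;s1;s0i],0,true);([::s0;s1;r0;s0i;s1i],4,false)];
 [::([::s0;s1;r0;r1],2,false)];
 [::];
 [::([::s0;s1;r0],5,true);([::s0;s1],2,false)];
 [::([::s0;s1;r0;r1;r0;r1i;r0i;r1i],5,false)]]];
 [::[::[::([::],0,false)];
 [::];
 [::];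
 [::([::s0;s1i;s1i],1,true)];
 [::];
 [::([::s0;r0i;r0i],2,true)];
 [::];
 [::([::s0;r1i;r1i],3,true)]];
 [::[::([::s0;s1;r1;s0;r1i;r0],6,true);([::s0;s1;r1;s0;r1i],2,false);([::s0;s1;r1;s0;s0;r1i;r0i;r0i],2,true);([::s0;s1;r1;s0i],0,false)];
 [::([::s0;s1;r1;s0i;r1i;r0],6,true);([::s0;s1;r1;s0i;r1i],2,false);([::s0;s1;r0i;r0i],2,true)];
 [::([::s0;s1;r1;s1i],1,false)];
 [::];
 [::];
 [::([::s0;s1;r1;r0i;r0i],2,true)];
 [::([::s0;s1],3,false)];
 [::]];
 [::[::];
 [::([::r0;s0i;s0i],0,true)];
 [::];
 [::([::r0;s1i;s1i],1,true)];
 [::([::],2,false)];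
 [::];
 [::];
 [::([::r0;r1i;r1i],3,true)]];
 [::[::([::s1;r1;r0;s0;r0i;r1i;r0;r1;s1i;r1i;r0i;s1i;r0;r1;s1],4,true);([::s1;r1;r0;s0;r0i;r1i;r0;r1;s1i;r1i;r0i;s1i;r0;r1;s1;s0;s1;s0;s1i;s0i;r1i;r0i],6,true);([::s1;r1;r0;s0;r0i;r1i;r0;r1;s1i;r1i;r0i;s1i;r0;r1;s1;s0;s1;r1i;r0i],6,false);([::s1;r1;r0;s0;r0i;r1i;r0;r1;s1i;r1i;r0i;s1i;r0;r1;s1;s0;s1;r1i;r0i;s1;r0;r1;s1i;r1i;r0i;s1i;r0;r1;s1i;s1i],1,true);([::s1;r1;r0;s0;r0i;r1i;r0;r1;s1i;r1i;r0i;s1i;r0;r1;s1;s0;s1i],1,false);([::s1;r1;r0;s0;r0i;r1i;r0;r1;s1i;r1i;r0i;s1i;r0;r1;s1;r1i;r0;s0i;s1i;s0i;s1;s0],6,true);([::s1;r1;r0;s0;r0i;r1i;r0;r1;s1i;r1i;r0i;s1i;r0;r1;s1;r1i;r0;s0i;s1i;s0i;s1;s0;r0;r1;s0;r1i;r0i;s1i;s0i;s1i],4,false);([::s1;r1;r0;s0;r0i;r1i;r0;r1;s1i;r1i;r0i;s1i;r0;r1;s1;r1i;r0;s0i;s1i;s0i;s1;s0;r0;r1;s0;r1i;r0i;r0i],2,true);([::s1;r1;r0;s0;r0i;r1i;r0;r1;s1i;r1i;r0i;s1i;r0;r1;s1;r1i;r0;s0i;s1i;s0i;s1;s0;r0;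r1;s0i],0,false);([::s1;r1;r0;s0;r1i;r0i;r1i],5,true);([::s1;r1;r0;s0;r1i;r0i;r1i;r0i],2,false);([::s1],2,true);([::s1;r0],5,false);([::s1;r0;r1],6,false)];
 [::([::s1;r1;r0;s0i;s0i],0,true);([::s1;r1;r0;s0;r1i;r0i;r1i],5,true);([::s1;r1;r0;s0;r1i;r0i;r1i;r0i],2,false);([::s1],2,true);([::s1;r0],5,false);([::s1;r0;r1],6,false);([::r0;r1;s1],4,true);([::r0;r1;s1;s0;s1;s0;s1i;s0i;r1i;r0i],6,true);([::r0;r1;s1;s0;s1;r1i;r0i],6,false);([::r0;r1;s1;s0;s1;r1i;r0i;s1;r0;r1;s1i;r1i;r0i;s1i;r0;r1;s1i;s1i],1,true);([::r0;r1;s1;s0;s1i],1,false);([::r0;r1;s1;r1i;r0;s0i;s1i;s0i;s1;s0],6,true);([::r0;r1;s1;r1i;r0;s0i;s1i;s0i;s1;s0;r0;r1;s0;r1i;r0i;s1i;s0i;s1i],4,false);([::r0;r1;s1;r1i;r0;s0i;s1i;s0i;s1;s0;r0;r1;s0;r1i;r0i;r0i],2,true);([::r0;r1;s1;r1i;r0;s0i;s1i;s0i;s1;s0;r0;r1;s0i],0,false)];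
 [::([::s1;r1;r0],6,true);([::s1;r1;r0;r0;r1i],3,false);([::s1;r1],2,false);([::s1;s0;r1i;r0i;r0i],2,true);([::s1;s0;r1i;r1i],3,true);([::s1;s0;r0;s1i],6,true);([::s1;s0;r0;s1i;r0i],2,false);([::s1;s0;r0;s1i;r0i;r1;s0;r1i;r0i;r0i],2,true)];
 [::([::s1;r1;r0;s1i;s1i],1,true);([::s1;r1;r0],6,true);([::s1;r1;r0;r0;r1i],3,false);([::s1;r1],2,false);([::s1;s0;r1i;r0i;r0i],2,true);([::s1;s0;r1i;r1i],3,true);([::s1;s0;r0;s1i],6,true);([::s1;s0;r0;s1i;r0i],2,false);([::s1;s0;r0;s1i;r0i;r1;s0;r1i;r0i;r0i],2,true)];
 [::([::s1;r1],2,false)];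
 [::];
 [::([::s1],5,true)];
 [::([::s1;r1;r0;r1i;r0i;r1i;r0i],2,true);([::s1;r1;r0;r1i;r0i;r1i],5,false)]];
 [::[::([::r0;s1;r0;s0i;s1i;s0i;s1;s0],6,true);([::r0;s1;r0;s0i;s1i;s0i;s1;s0;r0;r1;s0;r1i;r0i;s1i;s0i;s1i],4,false);([::r0;s1;r0;s0i;s1i;s0i;s1;s0;r0;r1;s0;r1i;r0i;r0i],2,true);([::r0;s1;r0;s0i;s1i;s0i;s1;s0;r0;r1;s0i],0,false)];
 [::([::r0;s1;r1;s0i;s0i],0,true);([::r0;s1;r0;s0i;s1i;s0i;s1;s0],6,true);([::r0;s1;r0;s0i;s1i;s0i;s1;s0;r0;r1;s0;r1i;r0i;s1i;s0i;s1i],4,false);([::r0;s1;r0;s0i;s1i;s0i;s1;s0;r0;r1;s0;r1i;r0i;r0i],2,true);([::r0;s1;r0;s0i;s1i;s0i;s1;s0;r0;r1;s0i],0,false)];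
 [::([::r0;s1;r1;s1i],1,false)];
 [::];
 [::];
 [::([::r0;s1;r1;r0i;r0i],2,true)];
 [::([::r0;s1],3,false)];
 [::]];
 [::[::([::s0;r0;s1;r1;r0;s0;r0i;r1i;s1i;r0i;r1;s1;r1i;r0],6,true);([::s0;r0;s1;r1;r0;s0;r0i;r1i;s1i;r0i;r1;s1;r1i],2,false);([::s0;r0;s1;r1;r0;s0;r0i;r1i;s1i;r0i;r1;s1;s0;r1i;r0i;r0i],2,true);([::s0;r0;s1;r1;r0;s0;r0i;r1i;s1i;r0i;r1;s1;s0;s1i],1,true);([::s0;r0;s1;r1;r0;s0;r0i;r1i;s1i;r0i;r1;s1;s0;s1;s0;s1i;s0i;s1i;s1i],1,false);([::s0;r0;s1;r1;r0;s0;r0i;r1i;s1i;r0i;r1;s1],4,false);([::s0;r0;s1;r1;r0;s0;r0i;r1i;s1i;r0i;r1;s0],6,true);([::s0;r0;s1;r1;r0;s0;r0i;r1i;r0;r1i;r1i;r1i],3,false);([::s0;r0;s1;r1;r0;s0;r0i;r1i;r0;r1i;s0i;r1i],2,true);([::s0;r0;s1;r1;r0;s0;r0i;r1i;r0;r1i;s0i;r1i;r0],6,false);([::s0;r0;s1;r1;r0;s0;r0i;r1i;r0;r1i;r0;r1i;r1i],3,false);([::s0;r0;s1;r1;r0;s0;r0i;r1i;r0;r1i],3,true);([::s0;r0;s1;r1;r0;s0;r0i;r1i],5,false);([::s0;r0;s1;r1;r0;s0;s0;r1i;r0i;s0i;r1i;r0;s1;r1;r0;r1i;r0i;r1i;r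0;s1i],6,true);([::s0;r0;s1;r1;r0;s0;s0;r1i;r0i;s0i;r1i;r0;s1;r1;r0;r1i;r0i;r1i;r0;s1i;r0i],2,false);([::s0;r0;s1;r1;r0;s0;s0;r1i;r0i;s0i;r1i;r0;s1;r1;r0;r1i;r0i;r1i;r0;s1i;r0i;r1;s0;r1i;r0i;r0i],2,true);([::s0;r0;s1;r1;r0;s0;s0;r1i;r0i;s0i;r1i;r0;s1;r0i],5,false);([::s0;r0;s1;r1;r0;s0i],0,false)];
 [::([::s0;r0;s1;r1;r0;s0i;r0i;r1i;s1i;r0i;r1;s0],6,true);([::s0;r0;s1;r1;r0;s0i;r0i;r1i;r0;r1i;r1i;r1i],3,false);([::s0;r0;s1;r1;r0;s0i;r0i;r1i;r0;r1i;s0i;r1i],2,true);([::s0;r0;s1;r1;r0;s0i;r0i;r1i;r0;r1i;s0i;r1i;r0],6,false);([::s0;r0;s1;r1;r0;s0i;r0i;r1i;r0;r1i;r0;r1i;r1i],3,false);([::s0;r0;s1;r1;r0;s0i;r0i;r1i;r0;r1i],3,true);([::s0;r0;s1;r1;r0;s0i;r0i;r1i],5,false);([::s0;r0;s1;r1;r0;r1i;r0i;s0i;r1i;r0;s1;r1;r0;r1i;r0i;r1i;r0;s1i],6,true);([::s0;r0;s1;r1;r0;r1i;r0i;s0i;r1i;r0;s1;r1;r0;r1i;r0i;r1i;r0;s1i;r0i],2,false);([::s0;r0;s1;r1;r0;r1i;r0i;s0i;r1i;r0;s1;r1;r0;r1i;r0i;r1i;r0;s1i;r0i;r1;s0;r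1i;r0i;r0i],2,true);([::s0;r0;s1;r1;r0;r1i;r0i;s0i;r1i;r0;s1;r0i],5,false);([::s0;r1;s0;s1i;s0i;s1;r1i;r0],6,true);([::s0;r1;s0;s1i;s0i;s1;r1i],2,false);([::s0;r1;s0;s1i;s0i;s1;s0;r1i;r0i;r0i],2,true);([::s0;r1;s0;s1i;s0i;s1;s0;s1i],1,true);([::s0;r1;s0;s1i;s0i;s1;s0;s1;s0;s1i;s0i;s1i;s1i],1,false);([::s0;r1;s0;s1i;s0i;s1],4,false)];
 [::([::s0;r0;s1;r1;r0;s1;r0i;r1i;s0;r1;r0i;r0i],2,false);([::s0;r0;s1;r1;r0;s1;r0i],2,true);([::s0;r0;s1;r1;r0;s1;r0;r1i;s0;r1i;r1i],3,false);([::s0;r0;s1;r1;r0;s1;r0;r1i],3,true);([::s0;r0;s1;r1;r0;s1],6,false);([::s0;r0;s1;r1;r0;s1i],1,false)];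
 [::([::s0;r0;s1;r1;r0;s1i;r0i;r1i;s0;r1;r0i;r0i],2,false);([::s0;r0;s1;r1;r0;s1i;r0i],2,true);([::s0;r0;s1;r1;r0;s1i;r0;r1i;s0;r1i;r1i],3,false);([::s0;r0;s1;r1;r0;s1i;r0;r1i],3,true);([::s0;r0;s1;r1;r0;s1i],6,false)];
 [::([::s0;r0;s1;r1],2,false)];
 [::];
 [::([::s0;r0;s1;r1;r0;r1;r0i;s0i;r1i;r0;s1;r1;r0;r1i;r0i;r1i;r0;s1i],6,true);([::s0;r0;s1;r1;r0;r1;r0i;s0i;r1i;r0;s1;r1;r0;r1i;r0i;r1i;r0;s1i;r0i],2,false);([::s0;r0;s1;r1;r0;r1;r0i;s0i;r1i;r0;s1;r1;r0;r1i;r0i;r1i;r0;s1i;r0i;r1;s0;r1i;r0i;r0i],2,true);([::s0;r0;s1;r1;r0;r1;r0i;s0i;r1i;r0;s1;r0i],5,false);([::s0;r0;s1;r1;r0;r1i],3,false)];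
 [::([::s0;r0;s1;r1;r0;r1i;r0i;s0i;r1i;r0;s1;r1;r0;r1i;r0i;r1i;r0;s1i],6,true);([::s0;r0;s1;r1;r0;r1i;r0i;s0i;r1i;r0;s1;r1;r0;r1i;r0i;r1i;r0;s1i;r0i],2,false);([::s0;r0;s1;r1;r0;r1i;r0i;s0i;r1i;r0;s1;r1;r0;r1i;r0i;r1i;r0;s1i;r0i;r1;s0;r1i;r0i;r0i],2,true);([::s0;r0;s1;r1;r0;r1i;r0i;s0i;r1i;r0;s1;r0i],5,false)]]];
 [::[::[::([::s1],0,false)];
 [::];
 [::([::],4,true)];
 [::([::s1;s0;s1i;s0i;s1i;s0i],0,true);([::s1;s0;s1i;s0i;s1i],4,false)];
 [::];
 [::([::s1;s0;r0i;r0i],2,true)];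
 [::([::s1;s0;r0;s1i],6,true);([::s1;s0;r0;s1i;r0i],2,false);([::s1;s0;r0;s1i;r0i;r1;s0;r1i;r0i;r0i],2,true)];
 [::([::s1;s0;r1i;r1i],3,true);([::s1;s0;r0;s1i],6,true);([::s1;s0;r0;s1i;r0i],2,false);([::s1;s0;r0;s1i;r0i;r1;s0;r1i;r0i;r0i],2,true)]];
 [::[::([::r1],0,false)];
 [::];
 [::([::r1;s1],4,true);([::r1;s1;s0;s1;s0;s1i;s0i;s1i;s1i],1,true);([::r1;s1;s0;s1i],1,false);([::r1;s1;s0;r1i;r0i;r0i],2,false);([::r1;s1;r1i],2,true);([::r1;s1;r1i;r0],6,false)];
 [::([::r1;s0;s1i;s1i],1,true);([::r1;s1],4,true);([::r1;s1;s0;s1;s0;s1i;s0i;s1i;s1i],1,true);([::r1;s1;s0;s1i],1,false);([::r1;s1;s0;r1i;r0i;r0i],2,false);([::r1;s1;r1i],2,true);([::r1;s1;r1i;r0],6,false)];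
 [::];
 [::([::r1;s0;r0i;r0i],2,true)];
 [::([::r1;s0;r1i;r1i],3,false);([::],2,true);([::r0],6,false)];
 [::([::r1;s0;r1i;r1i],3,true);([::r1;s0;r1i;r1i],3,false);([::],2,true);([::r0],6,false)]];
 [::[::];
 [::([::s1;r0;s0i;s0i],0,true)];
 [::];
 [::([::s1;r0;s1i;s1i],1,true)];
 [::([::s1],2,false)];
 [::];
 [::];
 [::([::s1;r0;r1i;r1i],3,true)]];
 [::[::([::r1;r0;s0;r0i;s0i;r1i;r0;s1],5,true);([::r1;r0;s0;r0i;s0i;r1i;r0;s1;r0;r1i],3,false);([::r1;r0;s0;r0i;s0i;r1i;r0;s1;r0;r1i;r0;r1i;r1i],3,true);([::r1;r0;s0;r0i;s0i;r1i;r0;s1;r0;r1i;s0i;r1i;r0],6,true);([::r1;r0;s0;r0i;s0i;r1i;r0;s1;r0;r1i;s0i;r1i],2,false);([::r1;r0;s0;r0i;s0i;r1i;r0;s1;r0;r1i;r1i;r1i],3,true);([::r1;r0;s0;r1i;r1i],3,false);([::],2,true);([::r0],5,false);([::r0;r1],6,false)];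
 [::([::r1;r0;s0i;s0i],0,true);([::r1;r0;s0;r0i;s0i;r1i;r0;s1],5,true);([::r1;r0;s0;r0i;s0i;r1i;r0;s1;r0;r1i],3,false);([::r1;r0;s0;r0i;s0i;r1i;r0;s1;r0;r1i;r0;r1i;r1i],3,true);([::r1;r0;s0;r0i;s0i;r1i;r0;s1;r0;r1i;s0i;r1i;r0],6,true);([::r1;r0;s0;r0i;s0i;r1i;r0;s1;r0;r1i;s0i;r1i],2,false);([::r1;r0;s0;r0i;s0i;r1i;r0;s1;r0;r1i;r1i;r1i],3,true);([::r1;r0;s0;r1i;r1i],3,false);([::],2,true);([::r0],5,false);([::r0;r1],6,false)];
 [::([::r1;r0],6,true);([::r1;r0;r0;r1i],3,false);([::r1;r0;r0;r1i;s0;r1i;r1i],3,true);([::r1],2,false);([::s0;r1;r0i;r0i],2,true)];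
 [::([::r1;r0;s1i;r0i],2,true);([::r1;r0;s1i;r0;r1i;s0i;r1;r0i;r0i],2,false);([::r1;r0;s1i;r0;r1i],3,true);([::r1;r0;s1i;r0;r1;s0i;r1i;r1i],3,false);([::r1;r0;s1i;r0;r1;s0i],0,true);([::r1;r0;s1i],6,false)];
 [::([::r1],2,false)];
 [::];
 [::([::],5,true)];
 [::([::r1;r0;r1i;r0i;r1i;r0i],2,true);([::r1;r0;r1i;r0i;r1i],5,false)]];
 [::[::([::s0;s1;r0;r1;s0;r1i;r0i;s1i;s1i],1,false);([::s0;s1],6,false)];
 [::([::s0;s1;r0;r1;s0i;r1i;r0i],6,true)];
 [::([::s0;s1;r0;r1;s1;r1i;r0i;s1i;r0;r1;s1;r1i;r0;s0i;s1i;s0i;s1;s0;r0;r1;s0i],0,true);([::s0;s1;r0;r1;s1;r1i;r0i;s1i;r0;r1;s1;r1i;r0;s0i;s1i;s0i;s1;s0;r0;r1;s0;r1i;r0i;r0i],2,false);([::s0;s1;r0;r1;s1;r1i;r0i;s1i;r0;r1;s1;r1i;r0;s0i;s1i;s0i;s1;s0;r0;r1;s0;r1i;r0i;s1i;s0i;s1i],4,true);([::s0;s1;r0;r1;s1;r1i;r0i;s1i;r0;r1;s1;r1i;r0;s0i;s1i;s0i;s1;s0],6,false);([::s0;s1;r0;r1;s1;r1i;r0i;s1i;r0;r1;s1;s0;s1i],1,true);([::s0;s1;r0;r1;s1;r1i;r0i;s1i;r0;r1;s1;s0;s1;r1i;r0i;s1;r0;r1;s1i;r1i;r0i;s1i;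r0;r1;s1i;s1i],1,false);([::s0;s1;r0;r1;s1;r1i;r0i;s1i;r0;r1;s1;s0;s1;r1i;r0i],6,true);([::s0;s1;r0;r1;s1;r1i;r0i;s1i;r0;r1;s1;s0;s1;s0;s1i;s0i;r1i;r0i],6,false);([::s0;s1;r0;r1;s1;r1i;r0i;s1i;r0;r1;s1],4,false);([::s0;s1;r0;r1;s1i],1,false)];
 [::([::s0;s1;r0;r1;s1i;r1i;r0i;s1i;r0;r1;s1;r1i;r0;s0i;s1i;s0i;s1;s0;r0;r1;s0i],0,true);([::s0;s1;r0;r1;s1i;r1i;r0i;s1i;r0;r1;s1;r1i;r0;s0i;s1i;s0i;s1;s0;r0;r1;s0;r1i;r0i;r0i],2,false);([::s0;s1;r0;r1;s1i;r1i;r0i;s1i;r0;r1;s1;r1i;r0;s0i;s1i;s0i;s1;s0;r0;r1;s0;r1i;r0i;s1i;s0i;s1i],4,true);([::s0;s1;r0;r1;s1i;r1i;r0i;s1i;r0;r1;s1;r1i;r0;s0i;s1i;s0i;s1;s0],6,false);([::s0;s1;r0;r1;s1i;r1i;r0i;s1i;r0;r1;s1;s0;s1i],1,true);([::s0;s1;r0;r1;s1i;r1i;r0i;s1i;r0;r1;s1;s0;s1;r1i;r0i;s1;r0;r1;s1i;r1i;r0i;s1i;r0;r1;s1i;s1i],1,false);([::s0;s1;r0;r1;s1i;r1i;r0i;s1i;r0;r1;s1;s0;s1;r1i;r0i],6,true);([::s0;s1;r0;r1;s1i;r1i;r0i;s1i;r0;r1;s1;s0;s1;s0;s1i;s0i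;r1i;r0i],6,false);([::s0;s1;r0;r1;s1i;r1i;r0i;s1i;r0;r1;s1],4,false)];
 [::];
 [::([::s0;s1;r0;r1;r0i;r0i],2,true)];
 [::([::s0;s1;r0],3,false)];
 [::]];
 [::[::([::s0;r0;r1;r0;s0;r1i;r0i;r1i],5,true);([::s0],5,false);([::s0;r1],6,false)];
 [::([::s0;r0;r1;r0;s0i;s0i],0,true);([::s0;r0;r1;r0;s0;r1i;r0i;r1i],5,true);([::s0],5,false);([::s0;r1],6,false)];
 [::([::s0;r0;r1;r0;s1;r0i;r1i;s0;r1;r0i;r0i],2,false);([::s0;r0;r1;r0;s1;r0i],2,true);([::s0;r0;r1;r0;s1;r0;r1i;s0;r1i;r1i],3,false);([::s0;r0;r1;r0;s1;r0;r1i],3,true);([::s0;r0;r1;r0;s1],6,false);([::s0;r0;r1;r0;s1i],1,false)];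
 [::([::s0;r0;r1;r0;s1i;r0i;r1i;s0;r1;r0i;r0i],2,false);([::s0;r0;r1;r0;s1i;r0i],2,true);([::s0;r0;r1;r0;s1i;r0;r1i;s0;r1i;r1i],3,false);([::s0;r0;r1;r0;s1i;r0;r1i],3,true);([::s0;r0;r1;r0;s1i],6,false)];
 [::([::s0;r0;r1],2,false)];
 [::];
 [::([::s0;r0],5,true);([::s0],2,false)];
 [::([::s0;r0;r1;r0;r1i;r0i;r1i],5,false)]]];
 [::[::[::];
 [::([::s0;s1;s0i;s0i],0,true)];
 [::([::s0],1,false)];
 [::];
 [::];
 [::([::s0;s1;r0i;r0i],2,true)];
 [::];
 [::([::s0;s1;r1i;r1i],3,true)]];
 [::[::];
 [::([::s0;r1;s0i;s0i],0,true)];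
 [::];
 [::([::s0;r1;s1i;s1i],1,true)];
 [::];
 [::([::s0;r1;r0i;r0i],2,true)];
 [::([::s0],3,false)];
 [::]];
 [::[::([::r0],4,true);([::r0;s0;s1;s0i],0,false);([::r0;s0;s1;s0i;s1i;s1i],1,true)];
 [::([::r0;s1;s0i;s0i],0,true);([::r0],4,true);([::r0;s0;s1;s0i],0,false);([::r0;s0;s1;s0i;s1i;s1i],1,true)];
 [::([::r0],1,false)];
 [::];
 [::];
 [::([::r0;s1;r0i;r0i],2,true)];
 [::];
 [::([::r0;s1;r1i;r1i],3,true)]];
 [::[::([::s0;r1;s0;r0;s0;r0i;r1i;r0;r1],6,true);([::s0;r1;s0;r0;s0;r0i;r1i;r0],5,true);([::s0;r1;s0;r0;s0;r0i;r1i],2,false);([::s0;r1;s0;r0;s0;s0;r1i;r1i],3,true);([::s0;r1;s0;r0;s0;s0;r0i;s0i;r1i;r0;s1;r0i],5,true);([::s0;r1;s0;r0;s0;s0;r0i;s0i;r1i;r0;s1;r1;r0;r1i;r0i;r1i;r0;s1i;r0i;r1;s0;r1i;r0i;r0i],2,false);([::s0;r1;s0;r0;s0;s0;r0i;s0i;r1i;r0;s1;r1;r0;r1i;r0i;r1i;r0;s1i;r0i],2,true);([::s0;r1;s0;r0;s0;s0;r0i;s0i;r1i;r0;s1;r1;r0;r1i;r0i;r1i;r0;s1i],6,false);([::s0;r1;s0;r0;s0i],0,false)];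
 [::([::s0;r1;s0;r0;s0i;r0i;r1i;r0;r1],6,true);([::s0;r1;s0;r0;s0i;r0i;r1i;r0],5,true);([::s0;r1;s0;r0;s0i;r0i;r1i],2,false);([::s0;r1;s0;r0;r1i;r1i],3,true);([::s0;r0;s1;r0i],5,true);([::s0;r0;s1;r1;r0;r1i;r0i;r1i;r0;s1i;r0i;r1;s0;r1i;r0i;r0i],2,false);([::s0;r0;s1;r1;r0;r1i;r0i;r1i;r0;s1i;r0i],2,true);([::s0;r0;s1;r1;r0;r1i;r0i;r1i;r0;s1i],6,false)];
 [::([::s0;r1;s0;r0;s1;r0i;r1i;s0;r0;s1i;r0i;r1;s0;r1i;r0i;r0i],2,false);([::s0;r1;s0;r0;s1;r0i;r1i;s0;r0;s1i;r0i],2,true);([::s0;r1;s0;r0;s1;r0i;r1i;s0;r0;s1i],6,false);([::s0;r1;s0;r0;s1;r0i;r1i;s0;r1i;r1i],3,false);([::s0;r1;s0;r0;s1;r0i;r1i;s0;r1i;r0i;r0i],2,false);([::s0;r1;s0;r0;s1;r0i],2,true);([::s0;r1;s0;r0;s1;r0;r1i],3,true);([::s0;r1;s0;r0;s1],6,false);([::s0;r1;s0;r0;s1i],1,false)];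
 [::([::s0;r1;s0;r0;s1i;r0i;r1i;s0;r0;s1i;r0i;r1;s0;r1i;r0i;r0i],2,false);([::s0;r1;s0;r0;s1i;r0i;r1i;s0;r0;s1i;r0i],2,true);([::s0;r1;s0;r0;s1i;r0i;r1i;s0;r0;s1i],6,false);([::s0;r1;s0;r0;s1i;r0i;r1i;s0;r1i;r1i],3,false);([::s0;r1;s0;r0;s1i;r0i;r1i;s0;r1i;r0i;r0i],2,false);([::s0;r1;s0;r0;s1i;r0i],2,true);([::s0;r1;s0;r0;s1i;r0;r1i],3,true);([::s0;r1;s0;r0;s1i],6,false)];
 [::([::s0;r1;s0],2,false)];
 [::];
 [::([::s0;r0;s1;r0i],5,true);([::s0;r0;s1;r1;r0;r1i;r0i;r1i;r0;s1i;r0i;r1;s0;r1i;r0i;r0i],2,false);([::s0;r0;s1;r1;r0;r1i;r0i;r1i;r0;s1i;r0i],2,true);([::s0;r0;s1;r1;r0;r1i;r0i;r1i;r0;s1i],6,false)];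
 [::([::s0;r1;s0;r0;r1i;r1i],3,true);([::s0;r0;s1;r0i],5,true);([::s0;r0;s1;r1;r0;r1i;r0i;r1i;r0;s1i;r0i;r1;s0;r1i;r0i;r0i],2,false);([::s0;r0;s1;r1;r0;r1i;r0i;r1i;r0;s1i;r0i],2,true);([::s0;r0;s1;r1;r0;r1i;r0i;r1i;r0;s1i],6,false)]];
 [::[::([::],6,false)];
 [::([::r0;r1;s0i;r1i;r0i],6,true);([::s1i;s1i],1,true)];
 [::];
 [::([::r0;r1;s1i;s1i],1,true)];
 [::];
 [::([::r0;r1;r0i;r0i],2,true)];
 [::([::r0],3,false)];
 [::]];
 [::[::([::s1;r0;r1;r0;s0;r0i;r1i;r0i;r1],6,true);([::s1;r0;r1;r0;s0;r0i;r1i;r0i],5,true);([::s1;r0;r1;r0;s0;s0;r1i;r0i;r1i],5,false);([::s1;r0;r1;r0;s0i],0,false)];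
 [::([::s1;r0;r1;r0;s0i;r0i;r1i;r0i;r1],6,true);([::s1;r0;r1;r0;s0i;r0i;r1i;r0i],5,true);([::s1;r0;r1;r0;r1i;r0i;r1i],5,false)];
 [::([::s1;r0;r1;r0],6,true);([::s1;r0;r1;r0;r0;r1i],3,false);([::s1;r0;r1;r0;r0;r1i;s0;r1i;r1i],3,true);([::s1;r0;r1],2,false);([::s1;r0;s0;r1;r0i;r0i],2,true)];
 [::([::s1;r0;r1;r0;s1i;s1i],1,true);([::s1;r0;r1;r0],6,true);([::s1;r0;r1;r0;r0;r1i],3,false);([::s1;r0;r1;r0;r0;r1i;s0;r1i;r1i],3,true);([::s1;r0;r1],2,false);([::s1;r0;s0;r1;r0i;r0i],2,true)];
 [::([::s1;r0;r1],2,false)];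
 [::];
 [::([::s1;r0],5,true);([::s1],2,false)];
 [::([::s1;r0;r1;r0;r1i;r0i;r1i],5,false)]]];
 [::[::[::([::s0;s1],0,false)];
 [::];
 [::([::s0],4,true);([::],0,false)];
 [::([::s0;s1;s0;s1i;s0i;s1i],4,false)];
 [::([::s0;s1;s0;r0i],2,false)];
 [::];
 [::([::s0;s1;s0;r1;s0i;r1i;r0],6,true);([::s0;s1;s0;r1;s0i;r1i],2,false);([::s0;s1;s0;r1i],3,true);([::s0;s1;s0;r1i],3,false)];
 [::([::s0;s1;s0;r1i;s0i;r1i;r0],6,true);([::s0;s1;s0;r1i;s0i;r1i],2,false);([::s0;s1;s0;r1i;r1i;r1i],3,true)]];
 [::[::([::s0;r1],0,false)];
 [::];
 [::([::s0;r1;s0;s1;s0i;s1;r1i;r0],6,true);([::s0;r1;s0;s1;s0i;s1;r1i],2,false);([::s0;r1;s0;s1;s0i;s1;s0;r1i;r0i;r0i],2,true);([::s0;r1;s0;s1;s0i;s1;s0;s1i],1,true);([::s0;r1;s0;s1;s0i;s1;s0;s1;s0;s1i;s0i;s1i;s1i],1,false);([::s0;r1;s0;s1;s0i;s1],4,false);([::s0;r1;s0;s1i],1,false)];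
 [::([::s0;r1;s0;s1i;s0i;s1;r1i;r0],6,true);([::s0;r1;s0;s1i;s0i;s1;r1i],2,false);([::s0;r1;s0;s1i;s0i;s1;s0;r1i;r0i;r0i],2,true);([::s0;r1;s0;s1i;s0i;s1;s0;s1i],1,true);([::s0;r1;s0;s1i;s0i;s1;s0;s1;s0;s1i;s0i;s1i;s1i],1,false);([::s0;r1;s0;s1i;s0i;s1],4,false)];
 [::];
 [::([::s0;r1;s0;r0i;r0i],2,true)];
 [::([::s0;r1;s0;r1;r0;s1i;r0i;r1;s0;r1i;r0i;r0i],2,false);([::s0;r1;s0;r1;r0;s1i;r0i],2,true);([::s0;r1;s0;r1;r0;s1i],6,false);([::s0;r1;s0;r1i],3,false)];
 [::([::s0;r1;s0;r1i;r0;s1i;r0i;r1;s0;r1i;r0i;r0i],2,false);([::s0;r1;s0;r1i;r0;s1i;r0i],2,true);([::s0;r1;s0;r1i;r0;s1i],6,false)]];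
 [::[::([::s0;s1;r0;s0;s1i;s0;s1;s0i;s1i;s1i],1,false);([::s0;s1;r0;s0;s1i;s0;s1;s0i],0,true);([::s0;s1;r0;s0;s1i],4,false);([::s0;s1;r0;s0i],0,false)];
 [::([::s0;s1;r0;s0i;s1i;s0;s1;s0i;s1i;s1i],1,false);([::s0;s1;r0;s0i;s1i;s0;s1;s0i],0,true);([::s0;s1;r0;s0i;s1i],4,false)];
 [::([::s0;s1;r0;s1i],1,false)];
 [::];
 [::([::s0;s1],2,false)];
 [::];
 [::];
 [::([::s0;s1;r0;r1i;r1i],3,true)]];
 [::[::([::s0;r1;r0;s0;r0i;s0i;r1i;r0;s1;r1;r0;r1i;r0i;r1i;r0;s1i],6,true);([::s0;r1;r0;s0;r0i;s0i;r1i;r0;s1;r1;r0;r1i;r0i;r1i;r0;s1i;r0i],2,false);([::s0;r1;r0;s0;r0i;s0i;r1i;r0;s1;r1;r0;r1i;r0i;r1i;r0;s1i;r0i;r1;s0;r1i;r0i;r0i],2,true);([::s0;r1;r0;s0;r0i;s0i;r1i;r0;s1;r0i],5,false);([::s0;r1;r0;s0;r1i;r1i],3,false);([::s0],2,true);([::s0;r0],5,false);([::s0;r0;r1],6,false)];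
 [::([::s0;r1;r0;s0i;s0i],0,true);([::s0;r1;r0;s0;r0i;s0i;r1i;r0;s1;r1;r0;r1i;r0i;r1i;r0;s1i],6,true);([::s0;r1;r0;s0;r0i;s0i;r1i;r0;s1;r1;r0;r1i;r0i;r1i;r0;s1i;r0i],2,false);([::s0;r1;r0;s0;r0i;s0i;r1i;r0;s1;r1;r0;r1i;r0i;r1i;r0;s1i;r0i;r1;s0;r1i;r0i;r0i],2,true);([::s0;r1;r0;s0;r0i;s0i;r1i;r0;s1;r0i],5,false);([::s0;r1;r0;s0;r1i;r1i],3,false);([::s0],2,true);([::s0;r0],5,false);([::s0;r0;r1],6,false)];
 [::([::s0;r1;r0],6,true);([::s0;r1;r0;r0;r1;s0i],0,false);([::s0;r1;r0;r0;r1;s0i;r1i;r1i],3,true);([::s0;r1;r0;r0;r1i],3,false);([::s0;r1;r0;r0;r1i;s0i;r1;r0i;r0i],2,true);([::s0;r1],2,false)];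
 [::([::s0;r1;r0;s1i;r0i;r1i;s0;r1;r0i;r0i],2,false);([::s0;r1;r0;s1i;r0i],2,true);([::s0;r1;r0;s1i;r0;r1i;s0;r1i;r1i],3,false);([::s0;r1;r0;s1i;r0;r1i],3,true);([::s0;r1;r0;s1i],6,false)];
 [::([::s0;r1],2,false)];
 [::];
 [::([::s0],5,true)];
 [::([::s0;r1;r0;r1i;r0i;r1i;r0i],2,true);([::s0;r1;r0;r1i;r0i;r1i],5,false)]];
 [::[::([::s1;r0;r1;s0;r1i;r0i;s1i;s1i],1,false);([::s1],6,false)];
 [::([::s1;r0;r1;s0i;r1i;r0i],6,true)];
 [::([::r0;r1;s1],4,true);([::r0;r1;s1;s0;s1;s0;s1i;s0i;r1i;r0i],6,true);([::r0;r1;s1;s0;s1;r1i;r0i],6,false);([::r0;r1;s1;s0;s1;r1i;r0i;s1;r0;r1;s1i;r1i;r0i;s1i;r0;r1;s1i;s1i],1,true);([::r0;r1;s1;s0;s1i],1,false);([::r0;r1;s1;r1i;r0;s0i;s1i;s0i;s1;s0],6,true);([::r0;r1;s1;r1i;r0;s0i;s1i;s0i;s1;s0;r0;r1;s0;r1i;r0i;s1i;s0i;s1i],4,false);([::r0;r1;s1;r1i;r0;s0i;s1i;s0i;s1;s0;r0;r1;s0;r1i;r0i;r0i],2,true);([::r0;r1;s1;r1i;r0;s0i;s1i;s0i;s1;s0;r0;r1;s0i],0,false)];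
 [::([::s1;r0;r1;s1i;s1i],1,true);([::r0;r1;s1],4,true);([::r0;r1;s1;s0;s1;s0;s1i;s0i;r1i;r0i],6,true);([::r0;r1;s1;s0;s1;r1i;r0i],6,false);([::r0;r1;s1;s0;s1;r1i;r0i;s1;r0;r1;s1i;r1i;r0i;s1i;r0;r1;s1i;s1i],1,true);([::r0;r1;s1;s0;s1i],1,false);([::r0;r1;s1;r1i;r0;s0i;s1i;s0i;s1;s0],6,true);([::r0;r1;s1;r1i;r0;s0i;s1i;s0i;s1;s0;r0;r1;s0;r1i;r0i;s1i;s0i;s1i],4,false);([::r0;r1;s1;r1i;r0;s0i;s1i;s0i;s1;s0;r0;r1;s0;r1i;r0i;r0i],2,true);([::r0;r1;s1;r1i;r0;s0i;s1i;s0i;s1;s0;r0;r1;s0i],0,false)];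
 [::];
 [::([::s1;r0;r1;r0i;r0i],2,true)];
 [::([::s1;r0],3,false)];
 [::]];
 [::[::([::r0;r1;r0;s0;r1i;r0i;r1i],5,true);([::],5,false);([::r1],6,false)];
 [::([::r0;r1;r0;s0i;s0i],0,true);([::r0;r1;r0;s0;r1i;r0i;r1i],5,true);([::],5,false);([::r1],6,false)];
 [::([::r0;r1;r0],6,true);([::r0;r1;r0;r0;r1i],3,false);([::r0;r1;r0;r0;r1i;s0;r1i;r1i],3,true);([::r0;r1],2,false);([::r0;s0;r1;r0i;r0i],2,true)];
 [::([::r0;r1;r0;s1i;s1i],1,true);([::r0;r1;r0],6,true);([::r0;r1;r0;r0;r1i],3,false);([::r0;r1;r0;r0;r1i;s0;r1i;r1i],3,true);([::r0;r1],2,false);([::r0;s0;r1;r0i;r0i],2,true)];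
 [::([::r0;r1],2,false)];
 [::];
 [::([::r0],5,true);([::],2,false)];
 [::([::r0;r1;r0;r1i;r0i;r1i],5,false)]]]].
Definition certPC : seq (seq (seq (seq (word Pg * nat * bool)))) := [::[::[::[::];
 [::];
 [::];
 [::];
 [::];
 [::];
 [::]];
 [::[::];
 [::];
 [::];
 [::];
 [::];
 [::];
 [::]];
 [::[::];
 [::];
 [::];
 [::];
 [::];
 [::];
 [::]];
 [::[::];
 [::];
 [::];
 [::];
 [::([::pfi;pti],0,false)];
 [::];
 [::]];
 [::[::];
 [::];
 [::];
 [::];
 [::];
 [::];
 [::]];
 [::[::];
 [::];
 [::];
 [::];
 [::([::po2;px;px;pq;pv;px;py;pvi;pqi;pxi;pyi],3,true);([::po2;px;px;pq;pv;px;py;pvi;pqi;pxi;pyi;pq],2,true);([::po2;px;px;pq;pv;px;py;pvi;pqi;pxi;pyi;pq;pv],1,true)];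
 [::];
 [::]]];
 [::[::[::];
 [::];
 [::];
 [::];
 [::];
 [::];
 [::]];
 [::[::];
 [::];
 [::];
 [::];
 [::];
 [::];
 [::]];
 [::[::];
 [::];
 [::];
 [::];
 [::];
 [::];
 [::]];
 [::[::];
 [::];
 [::];
 [::];
 [::([::po1i;pf;pti;pfi],0,true)];
 [::];
 [::]];
 [::[::];
 [::];
 [::];
 [::];
 [::];
 [::];
 [::]];
 [::[::];
 [::];
 [::];
 [::];
 [::([::pvi;pyi;pxi],1,false);([::pvi;pyi;pxi;pvi],2,false);([::pvi;pyi;pxi;pvi;pqi],3,false)];
 [::];
 [::]]];
 [::[::[::];
 [::];
 [::];
 [::];
 [::];
 [::];
 [::]];
 [::[::];
 [::];
 [::];
 [::];
 [::];
 [::];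
 [::]];
 [::[::];
 [::];
 [::];
 [::];
 [::];
 [::];
 [::]];
 [::[::];
 [::];
 [::];
 [::];
 [::([::],0,true)];
 [::];
 [::]];
 [::[::];
 [::];
 [::];
 [::];
 [::];
 [::];
 [::]];
 [::[::];
 [::];
 [::];
 [::];
 [::([::pyi;pq;pv],1,false);([::pyi;pq],2,false);([::pyi],3,false)];
 [::];
 [::]]];
 [::[::[::];
 [::];
 [::];
 [::];
 [::];
 [::];
 [::]];
 [::[::];
 [::];
 [::];
 [::];
 [::];
 [::];
 [::]];
 [::[::];
 [::];
 [::];
 [::];
 [::];
 [::];
 [::]];
 [::[::];
 [::];
 [::];
 [::];
 [::([::pti],0,false)];
 [::];
 [::]];
 [::[::];
 [::];
 [::];
 [::];
 [::];
 [::];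
 [::]];
 [::[::];
 [::];
 [::];
 [::];
 [::([::pvi;pqi;pxi;pyi],3,true);([::pvi;pqi;pxi;pyi;pq],2,true);([::pvi;pqi;pxi;pyi;pq;pv],1,true)];
 [::];
 [::]]];
 [::[::[::];
 [::];
 [::];
 [::];
 [::];
 [::];
 [::]];
 [::[::];
 [::];
 [::];
 [::];
 [::];
 [::];
 [::]];
 [::[::];
 [::];
 [::];
 [::];
 [::];
 [::];
 [::]];
 [::[::];
 [::];
 [::];
 [::];
 [::([::po0i;pti;pf;pt;pfi;pti],0,false)];
 [::];
 [::]];
 [::[::];
 [::];
 [::];
 [::];
 [::];
 [::];
 [::]];
 [::[::];
 [::];
 [::];
 [::];
 [::([::px;pyi;pq;pv;px;py;pvi;pqi;pxi;pyi],3,true);([::px;pyi;pq;pv;px;py;pvi;pqi;pxi;pyi;pq],2,true);([::px;pyi;pq;pv;px;py;pvi;pqi;pxi;pyi;pq;pv],1,true)];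
 [::];
 [::]]];
 [::[::[::];
 [::];
 [::];
 [::];
 [::];
 [::];
 [::]];
 [::[::];
 [::];
 [::];
 [::];
 [::];
 [::];
 [::]];
 [::[::];
 [::];
 [::];
 [::];
 [::];
 [::];
 [::]];
 [::[::];
 [::];
 [::];
 [::];
 [::([::pti],0,true)];
 [::];
 [::]];
 [::[::];
 [::];
 [::];
 [::];
 [::];
 [::];
 [::]];
 [::[::];
 [::];
 [::];
 [::];
 [::([::po2;px;pyi;pq;pv],1,false);([::po2;px;pyi;pq],2,false);([::po2;px;pyi],3,false)];
 [::];
 [::]]]].
Definition certPg : seq (seq (word Pg * nat * bool)) := [::[::];
 [::];
 [::];
 [::];
 [::];
 [::];
 [::];
 [::];
 [::];
 [::];
 [::];
 [::];
 [::];
 [::];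
 [::([::],1,false)];
 [::([::pv;pyi;pxi],1,true)];
 [::];
 [::];
 [::([::pv],1,false);([::],2,false)];
 [::([::pq;pv;pyi;pxi;pvi],2,true);([::pq;pv;pyi;pxi],1,true)];
 [::];
 [::]].
Definition certQA : seq (seq (word Qg * nat * bool)) := [::[::([::r0;r1;s1;r1i;r0;s0i;s1i;s0i;s1;s0;r0;r1;s1i;r1i;r0i;s1;r0;r1;s1i;r1i;r0i;s1i;r0;r1;s1],4,true);([::r0;r1;s1;r1i;r0;s0i;s1i;s0i;s1;s0;r0;r1;s1i;r1i;r0i;s1;r0;r1;s1i;r1i;r0i;s1i;r0;r1;s1;s0;s1;s0;s1i;s0i;r1i;r0i],6,true);([::r0;r1;s1;r1i;r0;s0i;s1i;s0i;s1;s0;r0;r1;s1i;r1i;r0i;s1;r0;r1;s1i;r1i;r0i;s1i;r0;r1;s1;s0;s1;r1i;r0i],6,false);([::r0;r1;s1;r1i;r0;s0i;s1i;s0i;s1;s0;r0;r1;s1i;r1i;r0i;s1;r0;r1;s1i;r1i;r0i;s1i;r0;r1;s1;s0;s1;r1i;r0i;s1;r0;r1;s1i;r1i;r0i;s1i;r0;r1;s1i;s1i],1,true);([::r0;r1;s1;r1i;r0;s0i;s1i;s0i;s1;s0;r0;r1;s1i;r1i;r0i;s1;r0;r1;s1i;r1i;r0i;s1i;r0;r1;s1;s0;s1i],1,false);([::r0;r1;s1;r1i;r0;s0i;s1i;s0i;s1;s0;r0;r1;s1i;r1i;r0i;s1;r0;r1;s1i;r1i;r0i;s1i;r0;r1;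s1;r1i;r0;s0i;s1i;s0i;s1;s0],6,true);([::r0;r1;s1;r1i;r0;s0i;s1i;s0i;s1;s0;r0;r1;s1i;r1i;r0i;s1;r0;r1;s1i;r1i;r0i;s1i;r0;r1;s1;r1i;r0;s0i;s1i;s0i;s1;s0;r0;r1;s0;r1i;r0i;s1i;s0i;s1i],4,false);([::r0;r1;s1;r1i;r0;s0i;s1i;s0i;s1;s0;r0;r1;s1i;r1i;r0i;s1;r0;r1;s1i;r1i;r0i;s1i;r0;r1;s1;r1i;r0;s0i;s1i;s0i;s1;s0;r0;r1;s0;r1i;r0i;r0i],2,true);([::r0;r1;s1;r1i;r0;s0i;s1i;s0i;s1;s0;r0;r1;s1i;r1i;r0i;s1;r0;r1;s1i;r1i;r0i;s1i;r0;r1;s1;r1i;r0;s0i;s1i;s0i;s1;s0;r0;r1;s0i],0,false);([::r0;r1;s1;r1i;r0;s0i;s1i;s0i;s1;s0;r0;r1;s1i;r1i;r0i;s1;r0;r1;s1i;r1i;r0i;s0;r0;r1;r0;r1i;r0i;r1i;r0;s1i],6,true);([::r0;r1;s1;r1i;r0;s0i;s1i;s0i;s1;s0;r0;r1;s1i;r1i;r0i;s1;r0;r1;s1i;r1i;r0i;s0;r0;r1;r0;r1i;r0i;r1i;r0;s1i;r0i],2,false);([::r0;r1;s1;r1i;r0;s0i;s1i;s0i;s1;s0;r0;r1;s1i;r1i;r0i;s1;r0;r1;s1i;r1i;r0i;s0;r0;r1;r0;r1i;r0i;r1i;r0;s1i;r0i;r1;s0;r1i;r0i;r0i],2,true);(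[::r0;r1;s1;r1i;r0;s0i;s1i;s0i;s1;s0;r0;r1;s1i;r1i;r0i;s1;r0;r1;s1i;r1i;r0i;s0],5,false);([::r0;r1;s1;r1i;r0;s0i;s1i;s0i;s1;s0;r0;r1;s1i;r1i;r0i;s1;r0;r1;s1i;r1i;r0i;s0;r0;s1i;r0i;r1;s0;r0;r1i;r1i],3,false);([::r0;r1;s1;r1i;r0;s0i;s1i;s0i;s1;s0;r0;r1;s1i;r1i;r0i;s1;r0;r1;s1i;r1i;r0i;s0;r0;s1i;r0i;r1;s0;r0;s0i;r0i;r1i],2,true);([::r0;r1;s1;r1i;r0;s0i;s1i;s0i;s1;s0;r0;r1;s1i;r1i;r0i;s1;r0;r1;s1i;r1i;r0i;s0;r0;s1i;r0i;r1;s0;r0;s0i;r0i;r1i;r0],5,false);([::r0;r1;s1;r1i;r0;s0i;s1i;s0i;s1;s0;r0;r1;s1i;r1i;r0i;s1;r0;r1;s1i;r1i;r0i;s0;r0;s1i;r0i;r1;s0;r0;s0i;r0i;r1i;r0;r1],6,false);([::r0;r1;s1;r1i;r0;s0i;s1i;s0i;s1;s0;r0;r1;s1i;r1i;r0i;s1;s0;r0i;r1;s1i],6,true);([::r0;r1;s1;r1i;r0;s0i;s1i;s0i;s1;s0;r0;r1;s1i;r1i;r0i;s1;s0;r0i;r1;s1i;r1i],5,true);([::r0;r1;s1;r1i;r0;s0i;s1i;s0i;s1;s0;r0;r1;s1i;r1i;r0i;s1;s0;r0i;r1;s1i;r1i;r0i],2,false);([::r0;r1;s1;r1i;r0;s0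i;s1i;s0i;s1;s0;r0;r1;s1i;r1i;r0i;s1;s0;r0i;r1;s1i;r1i;r0i;r1;r0;s0;r1i;r1i],3,true);([::r0;r1;s1;r1i;r0;s0i;s1i;s0i;s1;s0;r0;r1;s1i;r1i;r0i;s1;s0;r0i;r1;s1i;r1i;r0i;r1;r0;s0;r0i;s0i;r1i;r0;s1;r0;r1i;r1i;r1i],3,false);([::r0;r1;s1;r1i;r0;s0i;s1i;s0i;s1;s0;r0;r1;s1i;r1i;r0i;s1;s0;r0i;r1;s1i;r1i;r0i;r1;r0;s0;r0i;s0i;r1i;r0;s1;r0;r1i;s0i;r1i],2,true);([::r0;r1;s1;r1i;r0;s0i;s1i;s0i;s1;s0;r0;r1;s1i;r1i;r0i;s1;s0;r0i;r1;s1i;r1i;r0i;r1;r0;s0;r0i;s0i;r1i;r0;s1;r0;r1i;s0i;r1i;r0],6,false);([::r0;r1;s1;r1i;r0;s0i;s1i;s0i;s1;s0;r0;r1;s1i;r1i;r0i;s1;s0;r0i;r1;s1i;r1i;r0i;r1;r0;s0;r0i;s0i;r1i;r0;s1;r0;r1i;r0;r1i;r1i],3,false);([::r0;r1;s1;r1i;r0;s0i;s1i;s0i;s1;s0;r0;r1;s1i;r1i;r0i;s1;s0;r0i;r1;s1i;r1i;r0i;r1;r0;s0;r0i;s0i;r1i;r0;s1;r0;r1i],3,true);([::r0;r1;s1;r1i;r0;s0i;s1i;s0i;s1;s0;r0;r1;s1i;r1i;r0i;s1;s0;r0i;r1;s1i;r1i;r0i;r1;r0;s0;r0i;s0i;r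1i;r0;s1],5,false);([::r0;r1;s1;r1i;r0;s0i;s1i;s0i;s1;s0;r0;r1;s1i;r1i;r0i;s1;s0;r0i;r1;s1i;r1i;r0i;r1;r0;s0;r0i;s0i;r1i;r0;s1;r0;s0i;r1;r0;r1i;r0i;r1i],5,true);([::r0;r1;s1;r1i;r0;s0i;s1i;s0i;s1;s0;r0;r1;s1i;r1i;r0i;s1;s0;r0i;r1;s1i;r1i;r0i;r1;r0;s0;r0i;s0i;r1i;r0;s1;r0;s0i;r1;r0;r1i;r0i;r1i;r0i],2,false);([::r0;r1;s1;r1i;r0;s0i;s1i;s0i;s1;s0;r0;r1;s1i;r1i;r0i;s1;s0;r0i;r1;s1i;r1i;r0i;r1;r0;s0;r0i;s0i;r1i;r0;s1;r0;s0i;r1;r0;s0i;r0i;r1i],2,true);([::r0;r1;s1;r1i;r0;s0i;s1i;s0i;s1;s0;r0;r1;s1i;r1i;r0i;s1;s0;r0i;r1;s1i;r1i;r0i;r1;r0;s0;r0i;s0i;r1i;r0;s1;r0;s0i;r1;r0;s0i;r0i;r1i;r0],5,false);([::r0;r1;s1;r1i;r0;s0i;s1i;s0i;s1;s0;r0;r1;s1i;r1i;r0i;s1;s0;r0i;r1;s1i;r1i;r0i;r1;r0;s0;r0i;s0i;r1i;r0;s1;r0;s0i;r1;r0;s0i;r0i;r1i;r0;r1],6,false);([::r0;r1;s1;r1i;r0;s0i;s1i;s0i;s1;s0;r0;r1;s1i;r1i;r0i;s1;s0;r0i;r1;s1i;r1i;r0i;r1;r0;s0;r0i;s0i;r1i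;r0;s1;r0;s0i;r1;r0;s0i;r0i;r1i;s0;r0;s1i;r0i;r1;s0;r1i;r0i;r0i],2,false);([::r0;r1;s1;r1i;r0;s0i;s1i;s0i;s1;s0;r0;r1;s1i;r1i;r0i;s1;s0;r0i;r1;s1i;r1i;r0i;r1;r0;s0;r0i;s0i;r1i;r0;s1;r0;s0i;r1;r0;s0i;r0i;r1i;s0;r0;s1i;r0i],2,true);([::r0;r1;s1;r1i;r0;s0i;s1i;s0i;s1;s0;r0;r1;s1i;r1i;r0i;s1;s0;r0i;r1;s1i;r1i;r0i;r1;r0;s0;r0i;s0i;r1i;r0;s1;r0;s0i;r1;r0;s0i;r0i;r1i;s0;r0;s1i],6,false);([::r0;r1;s1;r1i;r0;s0i;s1i;s0i;s1;s0;r0;r1;s1i;r1i;r0i;s1;s0;r0i;r1;s1i;r1i;r0i;r1;r0;s0;r0i;s0i;r1i;r0;s1;r0;s0i;r1;r0;s0i;r0i;r1i;s0;r1i;r1i],3,false);([::r0;r1;s1;r1i;r0;s0i;s1i;s0i;s1;s0;r0;r1;s1i;r1i;r0i;s1;s0;r0i;r1;s1i;r1i;r0i;r1;r0;s0;r0i;s0i;r1i;r0;s1;r0;s0i;r1;r0;s0i;r0i;r1i;s0;r1i;r0i;r0i],2,false);([::r0;r1;s1;r1i;r0;s0i;s1i;s0i;s1;s0;r0;r1;s1i;r1i;r0i;s1;s0;r0i;r1;s1i;r1i;r0i;r1;r0;s0;r0i;s0i;r1i;r0;s1;r0;s0i;r1;r0;s0i;r0i],2,true);([::r0;r1;s1;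r1i;r0;s0i;s1i;s0i;s1;s0;r0;r1;s1i;r1i;r0i;s1;s0;r0i;r1;s1i;r1i;r0i;r1;r0;s0;r0i;s0i;r1i;r0;s1;r0;s0i;r1;r0;s0i;r0;r1i],3,true);([::r0;r1;s1;r1i;r0;s0i;s1i;s0i;s1;s0;r0;r1;s1i;r1i;r0i;s1;s0;r0i;r1;s1i;r1i;r0i;r1;r0;s0;r0i;s0i;r1i;r0;s1;r0;s0i;r1;r0;s0i],6,false);([::r0;r1;s1;r1i;r0;s0i;s1i;s0i;s1;s0;r0;r1;s1i;r1i;r0i;s1;s0;r0i;r1;s1i;r1i;r0i;r1;r0;s0;r0i;s0i;r1i;r0;s1;r0;s0i;r1;r0],6,true);([::r0;r1;s1;r1i;r0;s0i;s1i;s0i;s1;s0;r0;r1;s1i;r1i;r0i;s1;s0;r0i;r1;s1i;r1i;r0i;r1;r0;s0;r0i;s0i;r1i;r0;s1;r0;s0i;r1;r0;r0;r1i],3,false);([::r0;r1;s1;r1i;r0;s0i;s1i;s0i;s1;s0;r0;r1;s1i;r1i;r0i;s1;s0;r0i;r1;s1i;r1i;r0i;r1;r0;s0;r0i;s0i;r1i;r0;s1;r0;s0i;r1;r0;r0;r1i;s0;r1i;r0i;r0i],2,true);([::r0;r1;s1;r1i;r0;s0i;s1i;s0i;s1;s0;r0;r1;s1i;r1i;r0i;s1;s0;r0i;r1;s1i;r1i;r0i;r1;r0;s0;r0i;s0i;r1i;r0;s1;r0;s0i;r1],2,false);([::r0;r1;s1;r1i;r0;s0i;s1i;s0i;s1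;s0;r0;r1;s1i;r1i;r0i;s1;s0;r0i;r1;s1i;r1i;r0i;r1;r0;s0;r0i;s0i;r1i;r0;s1;r0;r1i;r0;s1i;s1i],1,true);([::r0;r1;s1;r1i;r0;s0i;s1i;s0i;s1;s0;r0;r1;s1i;r1i;r0i;s1;s0;r0i;r1;s1i;r1i;r0i;r1;r0;s0;r0i;s0i;r1i;r0;s1;r0;r1i;s0i;r1i;r0],6,true);([::r0;r1;s1;r1i;r0;s0i;s1i;s0i;s1;s0;r0;r1;s1i;r1i;r0i;s1;s0;r0i;r1;s1i;r1i;r0i;r1;r0;s0;r0i;s0i;r1i;r0;s1;r0;r1i;s0i;r1i],2,false);([::r0;r1;s1;r1i;r0;s0i;s1i;s0i;s1;s0;r0;r1;s1i;r1i;r0i;s1;s0;r0i;r1;s1i;r1i;r0i;r1;r0;s0;r0i;s0i;r1i;r0;s1;r0;r1i;r1i;r1i],3,true);([::r0;r1;s1;r1i;r0;s0i;s1i;s0i;s1;s0;r0;r1;s1i;r1i;r0i;s1;s0;r0i;r1;s1i;r1i;r0i;r1;r0;s0;s1;s0i;s1i;s1i],1,false);([::r0;r1;s1;r1i;r0;s0i;s1i;s0i;s1;s0;r0;r1;s1i;r1i;r0i;s1;s0;r0i;r1;s1i;r1i;r0i;r1;r0;s0;s1;s0i],0,true);([::r0;r1;s1;r1i;r0;s0i;s1i;s0i;s1;s0;r0;r1;s1i;r1i;r0i;s1;s0;r0i;r1;s1i;r1i;r0i;r1;r0;s0;s1;s0;s1i;s0i;s1i],6,true);([::r0;r1;s1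;r1i;r0;s0i;s1i;s0i;s1;s0;r0;r1;s1i;r1i;r0i;s1;s0;r0i;r1;s1i;r1i;r0i;r1;r0;s0;s1;s0;s1i;s0i;s1i;r0;r1i],3,false);([::r0;r1;s1;r1i;r0;s0i;s1i;s0i;s1;s0;r0;r1;s1i;r1i;r0i;s1;s0;r0i;r1;s1i;r1i;r0i;r1;r0;s0;s1;s0;s1i;s0i;s1i;r0;r1i;s0;r1i;r1i],3,true);([::r0;r1;s1;r1i;r0;s0i;s1i;s0i;s1;s0;r0;r1;s1i;r1i;r0i;s1;s0;r0i;r1;s1i;r1i;r0i;r1;r0;s0;s1;s0;s1i;s0i;s1i;r0i],2,false);([::r0;r1;s1;r1i;r0;s0i;s1i;s0i;s1;s0;r0;r1;s1i;r1i;r0i;s1;s0;r0i;r1;s1i;r1i;r0i;r1;r0;s0;s1;s0;s1i;s0i;s1i;r0i;r1i;s0;r1;r0i;r0i],2,true);([::r0;r1;s1;r1i;r0;s0i;s1i;s0i;s1;s0;r0;r1;s1i;r1i;r0i;s1;s0;r0i;r1;s1i;r1i;r0i;r1;r0],4,false)];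
 [::];
 [::];
 [::([::s0;r0;s1;s0i;r0i;s1i;s0;r0;s1;s0i;s1;r0i;r1;s1i;s0;s1i;s0i;s1],4,true);([::s0;r0;s1;s0i;r0i;s1i;s0;r0;s1;s0i;s1;r0i;r1;s1i;s0;s1i;s0i;s1;s0;s1;s0;s1i;s0i;s1i;s1i],1,true);([::s0;r0;s1;s0i;r0i;s1i;s0;r0;s1;s0i;s1;r0i;r1;s1i;s0;s1i;s0i;s1;s0;s1i],1,false);([::s0;r0;s1;s0i;r0i;s1i;s0;r0;s1;s0i;s1;r0i;r1;s1i;s0;s1i;s0i;s1;s0;r1i;r0i;r0i],2,false);([::s0;r0;s1;s0i;r0i;s1i;s0;r0;s1;s0i;s1;r0i;r1;s1i;s0;s1i;s0i;s1;r1i],2,true);([::s0;r0;s1;s0i;r0i;s1i;s0;r0;s1;s0i;s1;r0i;r1;s1i;s0;s1i;s0i;s1;r1i;r0],6,false);([::s0;r0;s1;s0i;r0i;s1i;s0;r0;s1;s0i;s1;r0i;r1;s1i;s0;s1i;s0i;r1i;r0;s0;s1;s0i;s1i;s1i],1,false);([::s0;r0;s1;s0i;r0i;s1i;s0;r0;s1;s0i;s1;r0i;r1;s1i;s0;s1i;s0i;r1i;r0;s0;s1;s0i],0,true);([::s0;r0;s1;s0i;r0i;s1i;s0;r0;s1;s0i;s1;r0i;r1;s1i;s0;s1i;s0i;r1i;r0],4,false);([::s0;r0;s1;s0i;r0i;s1i;s0;r0;s1;s0i;s1;r0i;r1;s1i;r1i;r0;s1;r1;r0;r1i;r0i;s0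i;r1i;r0;s1;r0i],5,true);([::s0;r0;s1;s0i;r0i;s1i;s0;r0;s1;s0i;s1;r0i;r1;s1i;r1i;r0;s1;r1;r0;r1i;r0i;s0i;r1i;r0;s1;r1;r0;r1i;r0i;r1i;r0;s1i;r0i;r1;s0;r1i;r0i;r0i],2,false);([::s0;r0;s1;s0i;r0i;s1i;s0;r0;s1;s0i;s1;r0i;r1;s1i;r1i;r0;s1;r1;r0;r1i;r0i;s0i;r1i;r0;s1;r1;r0;r1i;r0i;r1i;r0;s1i;r0i],2,true);([::s0;r0;s1;s0i;r0i;s1i;s0;r0;s1;s0i;s1;r0i;r1;s1i;r1i;r0;s1;r1;r0;r1i;r0i;s0i;r1i;r0;s1;r1;r0;r1i;r0i;r1i;r0;s1i],6,false);([::s0;r0;s1;s0i;r0i;s1i;s0;r0;s1;s0i;s1;r0i;r1;s1i;r1i;r0;s1;r1;r0;s0i;r0i;r1i],5,true);([::s0;r0;s1;s0i;r0i;s1i;s0;r0;s1;s0i;s1;r0i;r1;s1i;r1i;r0;s1;r1;r0;s0i;r0i;r1i;r0;r1i],3,false);([::s0;r0;s1;s0i;r0i;s1i;s0;r0;s1;s0i;s1;r0i;r1;s1i;r1i;r0;s1;r1;r0;s0i;r0i;r1i;r0;r1i;r0;r1i;r1i],3,true);([::s0;r0;s1;s0i;r0i;s1i;s0;r0;s1;s0i;s1;r0i;r1;s1i;r1i;r0;s1;r1;r0;s0i;r0i;r1i;r0;r1i;s0i;r1i;r0],6,true);([::s0;r0;s1;s0i;r0i;s1i;s0;r0;s1;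s0i;s1;r0i;r1;s1i;r1i;r0;s1;r1;r0;s0i;r0i;r1i;r0;r1i;s0i;r1i],2,false);([::s0;r0;s1;s0i;r0i;s1i;s0;r0;s1;s0i;s1;r0i;r1;s1i;r1i;r0;s1;r1;r0;s0i;r0i;r1i;r0;r1i;r1i;r1i],3,true);([::s0;r0;s1;s0i;r0i;s1i;s0;r0;s1;s0i;s1;r0i;r1;s1i;r1i;r0;s1;r1;r0;s0i;r0i;r1i;s1i;r0i;r1;s0],6,false);([::s0;r0;s1;s0i;r0i;s1i;s0;r0;s1;s0i;s1;r0i;r1;s1i;r1i;r0;s1;r1;r0i;r0i],2,false);([::s0;r0;s1;s0i;r0i;s1i;s0;r0;s1;s0i;s1;r0i;r1;s1i;r1i;r0;s1;s0i;r1],2,true);([::s0;r0;s1;s0i;r0i;s1i;s0;r0;s1;s0i;s1;r0i;r1;s1i;r1i;r0;s1;s0i;r1;r0;r0;r1i;s0;r1i;r1i],3,false);([::s0;r0;s1;s0i;r0i;s1i;s0;r0;s1;s0i;s1;r0i;r1;s1i;r1i;r0;s1;s0i;r1;r0;r0;r1i],3,true);([::s0;r0;s1;s0i;r0i;s1i;s0;r0;s1;s0i;s1;r0i;r1;s1i;r1i;r0;s1;s0i;r1;r0],6,false);([::s0;r0;s1;s0i;r0i;s1i;s0;r0;s1;s0i;s1;r0i;r1;s1i;r1i;r0;s1;s0i;r1;r0;s1;s0i;r0i;r1i;s0;r1;r0i;r0i],2,false);([::s0;r0;s1;s0i;r0i;s1i;s0;r0;s1;s0i;s1;r0i;r1;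s1i;r1i;r0;s1;s0i;r1;r0;s1;s0i;r0i],2,true);([::s0;r0;s1;s0i;r0i;s1i;s0;r0;s1;s0i;s1;r0i;r1;s1i;r1i;r0;s1;s0i;r1;r0;s1;s0i;r0;r1i;s0;r1i;r1i],3,false);([::s0;r0;s1;s0i;r0i;s1i;s0;r0;s1;s0i;s1;r0i;r1;s1i;r1i;r0;s1;s0i;r1;r0;s1;s0i;r0;r1i],3,true);([::s0;r0;s1;s0i;r0i;s1i;s0;r0;s1;s0i;s1;r0i;r1;s1i;r1i;r0;s1;s0i;r1;r0;s1;s0i],6,false);([::s0;r0;s1;s0i;r0i;s1i;s0;r0;s1;s0i;s1;r0i;r1;s1i;r1i;r0;s1;s0i;r1;r0;s1;s0i;s1;r0i;r1i;r0i;r1;s1i;r1i;r0;r1;r0;s1i],6,true);([::s0;r0;s1;s0i;r0i;s1i;s0;r0;s1;s0i;s1;r0i;r1;s1i;r1i;r0;s1;s0i;r1;r0;s1;s0i;s1;r0i;r1i;r0i;r1;s1i;r1i;r0;r1;r0;s1i;r0;r1i],3,false);([::s0;r0;s1;s0i;r0i;s1i;s0;r0;s1;s0i;s1;r0i;r1;s1i;r1i;r0;s1;s0i;r1;r0;s1;s0i;s1;r0i;r1i;r0i;r1;s1i;r1i;r0;r1;r0;s1i;r0;r1i;s0;r1i;r1i],3,true);([::s0;r0;s1;s0i;r0i;s1i;s0;r0;s1;s0i;s1;r0i;r1;s1i;r1i;r0;s1;s0i;r1;r0;s1;s0i;s1;r0i;r1i;r0i;r1;s1i;r1i;r0;r1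;r0;s1i;r0i],2,false);([::s0;r0;s1;s0i;r0i;s1i;s0;r0;s1;s0i;s1;r0i;r1;s1i;r1i;r0;s1;s0i;r1;r0;s1;s0i;s1;r0i;r1i;r0i;r1;s1i;r1i;r0;r1;r0;s1i;r0i;r1i;s0;r1;r0i;r0i],2,true);([::s0;r0;s1;s0i;r0i;s1i;s0;r0;s1;s0i;s1;r0i;r1;s1i;r1i;r0;s1;s0i;r1;r0;s1;s0i;s1;r1i;r0i;r1i],5,true);([::s0;r0;s1;s0i;r0i;s1i;s0;r0;s1;s0i;s1;r0i;r1;s1i;r1i;r0;s1;s0i;r1;r0;s1;s0i;s1;s0i;r0i;r1i;r0i],5,false);([::s0;r0;s1;s0i;r0i;s1i;s0;r0;s1;s0i;s1;r0i;r1;s1i;r1i;r0;s1;s0i;r1;r0;s1;s0i;s1;s0i;r0i;r1i;r0i;r1],6,false);([::s0;r0;s1;s0i;r0i;s1i;s0;r0;s1;s0i;s1;r0i;r1;s1i;r1i;r0;s1;s0i;r0i;r1;s1i],6,true);([::s0;r0;s1;s0i;r0i;s1i;s0;r0;s1;s0i;s1;r0i;r1;s1i;r1i;r0;s1;s0i;r0i;r1;s1i;r1i],5,true);([::s0;r0;s1;s0i;r0i;s1i;s0;r0;s1;s0i;s1;r0i;r1;s1i;r1i;r0;s1;s0i;r0i;r1;s1i;r1i;r0;r1;r0;s0;r1i;r0i;r1i],5,false);([::s0;r0;s1;s0i;r0i;s1i;s0;r0;s1;s0i;s1;r0i;r1;s1i;r1i;r0;s1;s0i;r0i;r1;s1i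;r1i;r0;r1;r0;s0;s1;s0i;s1i;s1i],1,false);([::s0;r0;s1;s0i;r0i;s1i;s0;r0;s1;s0i;s1;r0i;r1;s1i;r1i;r0;s1;s0i;r0i;r1;s1i;r1i;r0;r1;r0;s0;s1;s0i],0,true);([::s0;r0;s1;s0i;r0i;s1i;s0;r0;s1;s0i;s1;r0i;r1;s1i;r1i;r0;s1;s0i;r0i;r1;s1i;r1i;r0;r1;r0],4,false)]].
Definition certC1 : seq (seq (seq (word Qg * nat * bool))) := [::[::[::];
 [::([::],0,true)];
 [::];
 [::([::],1,true)]];
 [::[::];
 [::([::s1],0,true)];
 [::([::],1,false)];
 [::]];
 [::[::([::],0,false)];
 [::];
 [::];
 [::([::s0],1,true)]];
 [::[::([::s1],0,false)];
 [::];
 [::([::],4,true)];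
 [::([::],0,true);([::s0],4,false)]];
 [::[::];
 [::([::s0;s1],0,true)];
 [::([::s0],1,false)];
 [::]];
 [::[::([::s0;s1],0,false)];
 [::];
 [::([::],4,false);([::s1;s0],1,false)];
 [::([::],4,false)]]].
Definition certC2 : seq (seq (seq (word Qg * nat * bool))) := [::[::[::];
 [::([::],2,true)];
 [::];
 [::([::],3,true)]];
 [::[::];
 [::([::r1],2,true)];
 [::([::],3,false)];
 [::]];
 [::[::([::],2,false)];
 [::];
 [::];
 [::([::r0],3,true)]];
 [::[::([::r1],2,false)];
 [::];
 [::([::],5,true)];
 [::([::],2,true);([::r0],5,false)]];
 [::[::];
 [::([::r0;r1],2,true)];
 [::([::r0],3,false)];
 [::]];
 [::[::([::r0;r1],2,false)];
 [::];
 [::([::],5,false);([::r1;r0],3,false)];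
 [::([::],5,false)]]].

Definition ms (i a : nat) : nat := nth 0 (nth [::] mstab i) a.
Definition act (c : nat * nat) (x : letter Qg) : nat * nat :=
  match x.1 with Sg i => (ms i c.1, c.2) | Rh i => (ms i c.1, ms i c.2) end.
Definition cf (c : nat * nat) (w : word Qg) := foldl act c w.
Definition valid (c : nat * nat) := (c.1 < 6) && (c.2 < 6).
Definition gidx (x : letter Qg) : nat :=
  match x.1 with Sg i => nat_of_ord i | Rh i => 2 + nat_of_ord i end.
Definition lidx (x : letter Qg) : nat := 2 * gidx x + x.2.

Definition rep (c : nat * nat) : word Qg := nth [::] (nth [::] reptab c.1) c.2.
Definition rep1 (a : nat) : word Qg := nth [::] rep1tab a.
Definition rep2 (a : nat) : word Qg := nth [::] rep2tab a.
Definition tauf (c : nat * nat) (g : nat) : word Pg := nth [::] (nth [::] (nth [::] tautab c.1) c.2) g.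
Definition tl (c : nat * nat) (x : letter Qg) : word Pg :=
  if x.2 then @winv PP (tauf (act c x) (gidx x)) else tauf c (gidx x).
Fixpoint tw (c : nat * nat) (w : word Qg) : word Pg :=
  match w with [::] => [::] | x :: w' => tl c x ++ tw (act c x) w' end.

Definition fgen (s : Pg) : word Qg :=
  match s with
  | inl true => fg_pt | inl false => fg_pf
  | inr (inl o) => nth [::] [:: fg_po0; fg_po1; fg_po2] (nat_of_ord o)
  | inr (inr g) => match g with gx => fg_px | gy => fg_py | gu => fg_pu
                   | gv => fg_pv | gp => fg_pp | gq => fg_pq end
  end.
Definition fl (x : letter Pg) : word Qg := if x.2 then @winv QQ (fgen x.1) else fgen x.1.
Definition fw (w : word Pg) : word Qg := flatten (map fl w).

Definition chkQ := @checkc QQ eqQ Qrl.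
Definition chkP := @checkc PP eqPg Prl.
Definition cosl := iota 0 6.
Definition nthcE a b li := nth [::] (nth [::] (nth [::] certE a) b) li.
Definition nthcPC a b k := nth [::] (nth [::] (nth [::] certPC a) b) k.

Definition chkE : bool := all (fun a => all (fun b => all (fun li =>
  let x := nth s0 Qletters li in
  chkQ ((rep (a,b) ++ [:: x]) ++ @winv QQ (fw (tl (a,b) x) ++ rep (act (a,b) x))) (nthcE a b li))
  (iota 0 8)) cosl) cosl.
Definition chkPC : bool := all (fun a => all (fun b => all (fun k =>
  let p := nth ([::],[::]) Qrl k in
  chkP (tw (a,b) p.1 ++ @winv PP (tw (a,b) p.2)) (nthcPC a b k) && (cf (a,b) p.1 == cf (a,b) p.2))
  (iota 0 7)) cosl) cosl.
Definition chkPg : bool := all (fun li => let x := nth pt Pletters li in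
  chkP (tw (0,0) (fl x) ++ @winv PP [:: x]) (nth [::] certPg li) && (cf (0,0) (fl x) == (0,0)))
  (iota 0 22).
Definition chkQA : bool := all (fun k => let p := nth ([::],[::]) Prl k in
  chkQ (fw p.1 ++ @winv QQ (fw p.2)) (nth [::] certQA k)) (iota 0 4).
Definition oo (i : nat) : 'I_(3.-1) := if i == 0 then o0 else o1.
Definition chkC : bool := all (fun a => all (fun li =>
  let i := li./2 in let e := odd li in
  chkQ (rep1 a ++ [:: (Sg (oo i), e)] ++ @winv QQ (rep1 (ms i a))) (nth [::] (nth [::] certC1 a) li) &&
  chkQ (rep2 a ++ [:: (Rh (oo i), e)] ++ @winv QQ (rep2 (ms i a))) (nth [::] (nth [::] certC2 a) li))
  (iota 0 4)) cosl.
Definition chkM : bool := all (fun a => all (fun i => (ms i a < 6) && (ms i (ms i a) == a)) (iota 0 2)) cosl.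

Lemma chkE_ok : chkE. Proof. by vm_compute. Qed.
Lemma chkPC_ok : chkPC. Proof. by vm_compute. Qed.
Lemma chkPg_ok : chkPg. Proof. by vm_compute. Qed.
Lemma chkQA_ok : chkQA. Proof. by vm_compute. Qed.
Lemma chkC_ok : chkC. Proof. by vm_compute. Qed.
Lemma chkM_ok : chkM. Proof. by vm_compute. Qed.

Lemma ord2 (i : 'I_(3.-1)) : i = o0 \/ i = o1.
Proof.
case: i => [[|[|k]] Hi]; [left|right|by []]; exact: val_inj.
Qed.
Lemma ord3 (i : 'I_3) : i = q0 \/ i = q1 \/ i = q2.
Proof.
case: i => [[|[|[|k]]] Hi]; [left|right;left|right;right|by []]; exact: val_inj.
Qed.

Lemma Qletter_cases (x : letter Qg) : exists li, li < 8 /\ x = nth s0 Qletters li.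
Proof.
case: x => [[i|i] e]; case: (ord2 i) => ->; case: e;
  first [ by exists 0 | by exists 1 | by exists 2 | by exists 3
        | by exists 4 | by exists 5 | by exists 6 | by exists 7].
Qed.

Lemma Pletter_cases (x : letter Pg) : exists li, li < 22 /\ x = nth pt Pletters li.
Proof.
case: x => [[[|]|[o|g]] e].
- by case: e; [exists 1|exists 0].
- by case: e; [exists 3|exists 2].
- case: (ord3 o) => [->|[->|->]]; case: e;
  first [ by exists 4 | by exists 5 | by exists 6 | by exists 7 | by exists 8 | by exists 9].
- case: g; case: e;
  first [ by exists 10 | by exists 11 | by exists 12 | by exists 13 | by exists 14 | by exists 15
        | by exists 16 | by exists 17 | by exists 18 | by exists 19 | by exists 20 | by exists 21].
Qed.

Lemma Qrel_cases l r : FVB_rel 3 l r ->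
  exists k, k < 7 /\ l = (nth ([::],[::]) Qrl k).1 /\ r = (nth ([::],[::]) Qrl k).2.
Proof.
case=> [i|i|i j Hij|i j Hij|i j Hij|i j Hij|i j Hij|i j Hij].
- by case: (ord2 i) => ->; [exists 0|exists 1].
- by case: (ord2 i) => ->; [exists 2|exists 3].
- by case: (ord2 i) Hij => ->; case: (ord2 j) => -> //= _; exists 4.
- by case: (ord2 i) Hij => ->; case: (ord2 j) => -> //= _; exists 5.
- by case: (ord2 i) Hij => ->; case: (ord2 j) => -> //= _; exists 6.
- by case: (ord2 i) Hij => ->; case: (ord2 j) => -> /=; case.
- by case: (ord2 i) Hij => ->; case: (ord2 j) => -> /=; case.
- by case: (ord2 i) Hij => ->; case: (ord2 j) => -> /=; case.
Qed.

Lemma in_cosl a : a < 6 -> a \in cosl. Proof. by rewrite mem_iota. Qed.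
Lemma in_iota n a : a < n -> a \in iota 0 n. Proof. by rewrite mem_iota. Qed.

Lemma getM a i : a < 6 -> i < 2 -> (ms i a < 6) && (ms i (ms i a) == a).
Proof.
move=> Ha Hi. have := chkM_ok. rewrite /chkM => /allP /(_ a (in_cosl Ha)) /allP.
by move/(_ i (in_iota Hi)).
Qed.

Lemma oi_lt (x : letter Qg) : (match x.1 with Sg i => nat_of_ord i | Rh i => nat_of_ord i end) < 2.
Proof. by case: x => [[i|i] e] /=; exact: ltn_ord. Qed.

Lemma act_valid c x : valid c -> valid (act c x).
Proof.
case: c => a b /andP [Ha Hb]; case: x => [[i|i] e]; rewrite /valid /act /=;
  have Hi : i < 2 := ltn_ord i.
- by case/andP: (getM Ha Hi) => -> _.
- by case/andP: (getM Ha Hi) => -> _; case/andP: (getM Hb Hi) => -> _.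
Qed.

Lemma act_inv c x : valid c -> act (act c x) (inv_letter x) = c.
Proof.
case: c => a b /andP [Ha Hb]; case: x => [[i|i] e]; rewrite /act /=;
  have Hi : i < 2 := ltn_ord i.
- by case/andP: (getM Ha Hi) => _ /eqP ->.
- by case/andP: (getM Ha Hi) => _ /eqP ->; case/andP: (getM Hb Hi) => _ /eqP ->.
Qed.

Lemma cf_cat c a b : cf c (a ++ b) = cf (cf c a) b.
Proof. exact: foldl_cat. Qed.

Lemma cf_valid c w : valid c -> valid (cf c w).
Proof. elim: w c => [|x w IH] c Hc //=. apply: IH. exact: act_valid. Qed.

Lemma getPC a b k : a < 6 -> b < 6 -> k < 7 ->
  let p := nth ([::],[::]) Qrl k in
  chkP (tw (a,b) p.1 ++ @winv PP (tw (a,b) p.2)) (nthcPC a b k) && (cf (a,b) p.1 == cf (a,b) p.2).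
Proof.
move=> Ha Hb Hk. have := chkPC_ok. rewrite /chkPC => /allP /(_ a (in_cosl Ha)) /allP.
move/(_ b (in_cosl Hb)) /allP. by move/(_ k (in_iota Hk)).
Qed.

Lemma cf_weq w1 w2 : weq QQ w1 w2 -> forall c, valid c -> cf c w1 = cf c w2.
Proof.
elim=> {w1 w2} [w|w1 w2 _ IH|w1 w2 w3 _ IH1 _ IH2|u v x|u v l r H] c Hc.
- by [].
- by rewrite IH.
- by rewrite IH1 // IH2.
- rewrite !cf_cat /= act_inv //. exact: cf_valid.
- rewrite !cf_cat. have := cf_valid u Hc. case: (cf c u) => a b /andP [Ha Hb].
  have [k [Hk [-> ->]]] := Qrel_cases H.
  by case/andP: (getPC Ha Hb Hk) => _ /eqP ->.
Qed.

Lemma tw_cat c a b : tw c (a ++ b) = tw c a ++ tw (cf c a) b.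
Proof. by elim: a c => [|x a IH] c //=; rewrite IH catA. Qed.

Lemma tw_weq w1 w2 : weq QQ w1 w2 -> forall c, valid c -> weq PP (tw c w1) (tw c w2).
Proof.
elim=> {w1 w2} [w|w1 w2 _ IH|w1 w2 w3 _ IH1 _ IH2|u v x|u v l r H] c Hc.
- exact: weq_refl.
- exact: weq_sym (IH c Hc).
- exact: weq_trans (IH1 c Hc) (IH2 c Hc).
- rewrite !tw_cat /= act_inv; last exact: cf_valid.
  set c' := cf c u.
  have Hx : weq PP (tl c' x ++ tl (act c' x) (inv_letter x)) [::].
    case: x => s [] ; rewrite /tl /=.
    + exact: weq_winvl.
    + rewrite act_inv; last exact: cf_valid.
      exact: weq_winvr.
  rewrite cats0. by have := weq_ctx (tw c u) (tw c' v) Hx.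
- rewrite !tw_cat. have := cf_valid u Hc. rewrite -/(cf c u).
  case: (cf c u) => a b /andP [Ha Hb].
  have [k [Hk [-> ->]]] := Qrel_cases H.
  case/andP: (getPC Ha Hb Hk) => /(@checkc_eq PP _ eqPgP _ PrlP) Hw /eqP ->.
  exact: weq_ctx.
Qed.

Lemma fw_cat a b : fw (a ++ b) = fw a ++ fw b.
Proof. by rewrite /fw map_cat flatten_cat. Qed.

Lemma fl_inv x : fl (inv_letter x) = @winv QQ (fl x).
Proof. by case: x => s [] //=; rewrite /fl /= winvK. Qed.

Lemma getQA k : k < 4 -> weq QQ (fw (nth ([::],[::]) Prl k).1) (fw (nth ([::],[::]) Prl k).2).
Proof.
move=> Hk. apply: (@checkc_eq QQ _ eqQP _ QrlP).
have := chkQA_ok. rewrite /chkQA => /allP. move/(_ k (in_iota Hk)) => H. exact: H.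
Qed.

Lemma f_weq w1 w2 : weq PP w1 w2 -> weq QQ (fw w1) (fw w2).
Proof.
elim=> {w1 w2} [w|w1 w2 _ IH|w1 w2 w3 _ IH1 _ IH2|u v x|u v l r H].
- exact: weq_refl.
- exact: weq_sym.
- exact: weq_trans IH2.
- rewrite !fw_cat. rewrite /fw /= cats0 -/(fw v) fl_inv catA.
  have := @weq_ctx QQ (fw u) (fw v) _ _ (@weq_winvr QQ (fl x)). by rewrite !catA.
- rewrite !fw_cat. apply: weq_ctx.
  case: H => [l0 r0 H0|l0 r0 H0].
  + case: H0 => -> ->. exact: (getQA (k := 0)).
  + case: H0 => [l1 r1 []|l1 r1 H1].
    case: H1.
    * exact: (getQA (k := 1)).
    * exact: (getQA (k := 2)).
    * exact: (getQA (k := 3)).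
Qed.

Lemma getPg x : weq PP (tw (0,0) (fl x)) [:: x] /\ cf (0,0) (fl x) = (0,0).
Proof.
have [li [Hli ->]] := Pletter_cases x.
have := chkPg_ok. rewrite /chkPg => /allP /(_ li (in_iota Hli)) /andP [H1 /eqP H2].
split=> //. exact: (@checkc_eq PP _ eqPgP _ PrlP _ _ _ H1).
Qed.

Lemma fw_cf w : cf (0,0) (fw w) = (0,0).
Proof. elim: w => [|x w IH] //=. by rewrite /fw /= cf_cat (proj2 (getPg x)). Qed.

Lemma tw_fw w : weq PP (tw (0,0) (fw w)) w.
Proof.
elim: w => [|x w IH] /=; first exact: weq_refl.
rewrite /fw /= tw_cat (proj2 (getPg x)) -/(fw w).
exact: (weq_cat (proj1 (getPg x)) IH).
Qed.

Lemma getC a li : a < 6 -> li < 4 ->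
  chkQ (rep1 a ++ [:: (Sg (oo li./2), odd li)] ++ @winv QQ (rep1 (ms li./2 a))) (nth [::] (nth [::] certC1 a) li) &&
  chkQ (rep2 a ++ [:: (Rh (oo li./2), odd li)] ++ @winv QQ (rep2 (ms li./2 a))) (nth [::] (nth [::] certC2 a) li).
Proof.
move=> Ha Hl. have := chkC_ok. rewrite /chkC => /allP /(_ a (in_cosl Ha)) /allP.
by move/(_ li (in_iota Hl)).
Qed.

Lemma pi_step c x : valid c ->
  weq QQ (rep1 c.1 ++ [:: pi_letter 3 x]) (rep1 (act c x).1).
Proof.
case: c => a b /andP [Ha _] /=.
have [li [Hli ->]] := Qletter_cases x.
have H (lj : nat) : lj < 4 -> weq QQ (rep1 a ++ [:: (Sg (oo lj./2), odd lj)]) (rep1 (ms lj./2 a)).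
  move=> Hlj. case/andP: (getC Ha Hlj) => H1 _. rewrite catA in H1. exact: (@checkc_eq QQ _ eqQP _ QrlP _ _ _ H1).
case: li Hli => [|[|[|[|[|[|[|[|li]]]]]]]] Hli;
  [exact: (H 0 isT)|exact: (H 1 isT)|exact: (H 2 isT)|exact: (H 3 isT)
  |exact: (H 0 isT)|exact: (H 1 isT)|exact: (H 2 isT)|exact: (H 3 isT)|by []].
Qed.

Lemma nu_step c x : valid c -> is_rho 3 x ->
  weq QQ (rep2 c.2 ++ [:: x]) (rep2 (act c x).2).
Proof.
case: c => a b /andP [_ Hb] /=.
have [li [Hli ->]] := Qletter_cases x.
have H (lj : nat) : lj < 4 -> weq QQ (rep2 b ++ [:: (Rh (oo lj./2), odd lj)]) (rep2 (ms lj./2 b)).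
  move=> Hlj. case/andP: (getC Hb Hlj) => _ H1. rewrite catA in H1. exact: (@checkc_eq QQ _ eqQP _ QrlP _ _ _ H1).
case: li Hli => [|[|[|[|[|[|[|[|li]]]]]]]] Hli //= _;
  [exact: (H 0 isT)|exact: (H 1 isT)|exact: (H 2 isT)|exact: (H 3 isT)].
Qed.

Lemma nu_fix c x : ~~ is_rho 3 x -> (act c x).2 = c.2.
Proof. by case: x => [[i|i] e]. Qed.

Lemma pi_rep w c : valid c -> weq QQ (rep1 c.1 ++ pi_word 3 w) (rep1 (cf c w).1).
Proof.
elim: w c => [|x w IH] c Hc /=; first by rewrite cats0; exact: weq_refl.
have := @weq_catr QQ (pi_word 3 w) _ _ (pi_step x Hc). rewrite -catA /= => H.
apply: weq_trans H _. exact: IH (act_valid x Hc).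
Qed.

Lemma nu_rep w c : valid c -> weq QQ (rep2 c.2 ++ nu_word 3 w) (rep2 (cf c w).2).
Proof.
elim: w c => [|x w IH] c Hc /=; first by rewrite cats0; exact: weq_refl.
rewrite /nu_word /=. case: ifP => Hr.
- have := @weq_catr QQ (nu_word 3 w) _ _ (nu_step Hc Hr). rewrite -catA /= => H.
  apply: weq_trans H _. exact: IH (act_valid x Hc).
- have := IH (act c x) (act_valid x Hc). by rewrite nu_fix ?Hr.
Qed.

Lemma cf_pi_gen w c c' : c.1 = c'.1 -> (cf c (pi_word 3 w)).1 = (cf c' w).1.
Proof.
elim: w c c' => [|x w IH] c c' E //=.
apply: IH. by case: x => [[i|i] e]; rewrite /= E.
Qed.
Lemma cf_pi w c : (cf c (pi_word 3 w)).1 = (cf c w).1.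
Proof. exact: cf_pi_gen. Qed.

Lemma cf_nu_gen w c c' : c.2 = c'.2 -> (cf c (nu_word 3 w)).2 = (cf c' w).2.
Proof.
elim: w c c' => [|x w IH] c c' E //=.
rewrite /nu_word /=. case: ifP => Hr.
- apply: IH. by case: x Hr => [[i|i] e] //=; rewrite E.
- apply: IH. by rewrite nu_fix ?Hr.
Qed.
Lemma cf_nu w c : (cf c (nu_word 3 w)).2 = (cf c w).2.
Proof. exact: cf_nu_gen. Qed.

Lemma E_step c x : valid c -> weq QQ (rep c ++ [:: x]) (fw (tl c x) ++ rep (act c x)).
Proof.
case: c => a b /andP [Ha Hb].
have [li [Hli ->]] := Qletter_cases x.
apply: (@checkc_eq QQ _ eqQP _ QrlP).
have := chkE_ok. rewrite /chkE => /allP /(_ a (in_cosl Ha)) /allP /(_ b (in_cosl Hb)) /allP.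
move/(_ li (in_iota Hli)) => H. exact: H.
Qed.

Lemma E_rep v c : valid c -> weq QQ (rep c ++ v) (fw (tw c v) ++ rep (cf c v)).
Proof.
elim: v c => [|x v IH] c Hc /=; first by rewrite cats0; exact: weq_refl.
have H1 := @weq_catr QQ v _ _ (E_step x Hc). rewrite -!catA /= in H1.
apply: weq_trans H1 _. rewrite fw_cat -catA. apply: weq_catl.
exact: IH (act_valid x Hc).
Qed.

Theorem mainTheorem3 :
  iso_to_subgroup (free_product Z2 (free_product (free_group 3) Gamma))
                  (FVB 3) (in_X 3).
Proof.
exists fw. split.
- exact: f_weq.
- by move=> w1 w2; rewrite fw_cat; exact: weq_refl.
- move=> w1 w2 H.
  have H' := tw_weq H (isT : valid (0,0)).
  exact: weq_trans (weq_sym (tw_fw w1)) (weq_trans H' (tw_fw w2)).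
- move=> w. split.
  + have := pi_rep (fw w) (isT : valid (0,0)). by rewrite fw_cf.
  + have := nu_rep (fw w) (isT : valid (0,0)). by rewrite fw_cf.
- move=> v [Hp Hn].
  have E1 : (cf (0,0) v).1 = 0.
    by rewrite -cf_pi (cf_weq Hp (isT : valid (0,0))).
  have E2 : (cf (0,0) v).2 = 0.
    by rewrite -cf_nu (cf_weq Hn (isT : valid (0,0))).
  exists (tw (0,0) v). apply: weq_sym.
  have := E_rep v (isT : valid (0,0)).
  by case: (cf (0,0) v) E1 E2 => a b /= -> ->; rewrite cats0.
Qed.
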